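(* For every $C_\pi$ process $P$, every channel $m$, every prefix $\pi$, and channels $k,l$ and variables $x,y$, we have $$(\nu k)\big((\nu l)\overline{k}\langle l\rangle.m(y).[y=l]\pi.0 \;|\; k(x).P\big)\;\sim\;(\nu k)\big((\nu l)\overline{k}\langle l\rangle.m(y).0 \;|\; k(x).P\big).$$
   Context: The Confidential $\pi$-calculus $C_\pi$. There are two disjoint countable sets: ${\cal V}$ of variables (ranged over by $x,y,z,\dots$) and ${\cal C}$ of channels (ranged over by $k,l,m,n,\dots$). Let ${\cal N}={\cal V}\cup{\cal C}$, ranged over by $a,b,c,\dots$. Prefixes: $\pi ::= \overline{a}\langle k\rangle \mid a(x) \mid [a=b]\pi$. Processes: $P ::= 0 \mid \pi.P \mid P\,|\,P \mid (\nu k)P \mid\, !P$. The object of an output is always a channel, and the bound object of an input is always a variable. In $(\nu k)P$ the channel $k$ is bound, and in $a(x).P$ the variable $x$ is bound, with scope $P$. The sets $\mathrm{fn}(P)$, $\mathrm{bn}(P)$ and $\mathrm{n}(P)$ are the free, bound and all names of $P$. The set $\mathrm{fo}(P)$ consists of the free channels of $P$ that occur as objects of output prefixes in $P$. Processes are identified up to $\alpha$-conversion. Actions: $\alpha ::= \overline{k}\langle l\rangle \mid k(l) \mid (\nu l)\overline{k}\langle l\rangle \mid \tau$, where $k,l$ are channels. We have $\mathrm{fn}(\overline{k}\langle l\rangle)=\mathrm{fn}(k(l))=\{k,l\}$, $\mathrm{fn}((\nu l)\overline{k}\langle l\rangle)=\{k\}$, $\mathrm{bn}((\nu l)\overline{k}\langle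 l\rangle)=\{l\}$, all other bound-name sets are empty, $\mathrm{fn}(\tau)=\emptyset$, and $\mathrm{n}(\alpha)=\mathrm{fn}(\alpha)\cup\mathrm{bn}(\alpha)$. The labelled transition relation $\xrightarrow{\alpha}$ is the least relation closed under the following rules: - (out) $\overline{k}\langle l\rangle.P \xrightarrow{\overline{k}\langle l\rangle} P$. - (in) $k(x).P \xrightarrow{k(l)} P\{l/x\}$ for every channel $l$. - (match) If $\pi.P\xrightarrow{\alpha}P'$, then $[a=a]\pi.P\xrightarrow{\alpha}P'$. - (res) If $P\xrightarrow{\alpha}P'$ and $k\notin \mathrm{n}(\alpha)$, then $(\nu k)P\xrightarrow{\alpha}(\nu k)P'$. - (open) If $P\xrightarrow{\overline{k}\langle l\rangle}Q$ and $k\neq l$, then $(\nu l)P\xrightarrow{(\nu l)\overline{k}\langle l\rangle}Q$. - (par-l) If $P\xrightarrow{\alpha}Q$ and $\mathrm{bn}(\alpha)\cap\mathrm{fn}(R)=\emptyset$, then $P|R\xrightarrow{\alpha}Q|R$. - (comm-l) If $P\xrightarrow{\overline{k}\langle l\rangle}P'$ and $Q\xrightarrow{k(l)}Q'$, then $P|Q\xrightarrow{\tau}P'|Q'$. - (close-l) If $P\xrightarrow{(\nu l)\overline{k}\langle l\rangle}P'$, $Q\xrightarrow{k(l)}Q'$ and $l\notin\mathrm{fn}(Q)$, then $P|Q\xrightarrow{\tau}(\nu l)(P'|Q')$. - The symmetric rules (par-r), (comm-r), (close-r). - (rep-act) If $P\xrightarrow{\alpha}P'$, then $!P\xrightarrow{\alpha}P'|!P$.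 - (rep-comm) If $P\xrightarrow{\overline{k}\langle l\rangle}P'$ and $P\xrightarrow{k(l)}P''$, then $!P\xrightarrow{\tau}(P'|P'')|!P$. - (rep-close) If $P\xrightarrow{(\nu l)\overline{k}\langle l\rangle}P'$, $P\xrightarrow{k(l)}P''$ and $l\notin\mathrm{fn}(P)$, then $!P\xrightarrow{\tau}(\nu l)(P'|P'')|!P$. Strong bisimilarity $\sim$ is the largest symmetric binary relation on processes such that whenever $P\sim Q$ and $P\xrightarrow{\alpha}P'$ with $\mathrm{bn}(\alpha)\cap\mathrm{fn}(Q)=\emptyset$, there exists $Q'$ with $Q\xrightarrow{\alpha}Q'$ and $P'\sim Q'$. *)

(* Defs.v *)
From Stdlib Require Import Arith.

Definition var := nat.
Definition chan := nat.

Inductive name : Type :=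
| NV : var -> name
| NC : chan -> name.

Inductive prefix : Type :=
| POut : name -> chan -> prefix
| PIn : name -> var -> prefix
| PMatch : name -> name -> prefix -> prefix.

Inductive proc : Type :=
| Nil : proc
| Pre : prefix -> proc -> proc
| Par : proc -> proc -> proc
| Res : chan -> proc -> proc
| Rep : proc -> proc.

Fixpoint pbv (p : prefix) : option var :=
  match p with
  | POut _ _ => None
  | PIn _ y => Some y
  | PMatch _ _ q => pbv q
  end.

Fixpoint pchan (c : chan) (p : prefix) : Prop :=
  match p with
  | POut a k => a = NC c \/ k = c
  | PIn a _ => a = NC c
  | PMatch a b q => a = NC c \/ b = NC c \/ pchan c q
  end.

Fixpoint free_chan (c : chan) (P : proc) : Prop :=
  match P with
  | Nil => False
  | Pre p Q => pchan c p \/ free_chan c Q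
  | Par Q R => free_chan c Q \/ free_chan c R
  | Res k Q => k <> c /\ free_chan c Q
  | Rep Q => free_chan c Q
  end.

Fixpoint chan_bound (c : chan) (P : proc) : Prop :=
  match P with
  | Nil => False
  | Pre _ Q => chan_bound c Q
  | Par Q R => chan_bound c Q \/ chan_bound c R
  | Res k Q => k = c \/ chan_bound c Q
  | Rep Q => chan_bound c Q
  end.

Fixpoint occurs_c (c : chan) (P : proc) : Prop :=
  match P with
  | Nil => False
  | Pre p Q => pchan c p \/ occurs_c c Q
  | Par Q R => occurs_c c Q \/ occurs_c c R
  | Res k Q => k = c \/ occurs_c c Q
  | Rep Q => occurs_c c Q
  end.

Fixpoint pvar (x : var) (p : prefix) : Prop :=
  match p with
  | POut a _ => a = NV x
  | PIn a y => a = NV x \/ y = x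
  | PMatch a b q => a = NV x \/ b = NV x \/ pvar x q
  end.

Fixpoint occurs_v (x : var) (P : proc) : Prop :=
  match P with
  | Nil => False
  | Pre p Q => pvar x p \/ occurs_v x Q
  | Par Q R => occurs_v x Q \/ occurs_v x R
  | Res _ Q => occurs_v x Q
  | Rep Q => occurs_v x Q
  end.

(* ---------- naive total renamings (used only for alpha-conversion,
   always with a completely fresh target name) ---------- *)
Definition ren_c_chan (k k' c : chan) : chan := if Nat.eqb c k then k' else c.

Definition ren_c_name (k k' : chan) (a : name) : name :=
  match a with
  | NC c => NC (ren_c_chan k k' c)
  | NV y => NV y
  end.

Fixpoint ren_c_pref (k k' : chan) (p : prefix) : prefix :=
  match p with
  | POut a c => POut (ren_c_name k k' a) (ren_c_chan k k' c)
  | PIn a y => PIn (ren_c_name k k' a) y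
  | PMatch a b q => PMatch (ren_c_name k k' a) (ren_c_name k k' b) (ren_c_pref k k' q)
  end.

Fixpoint ren_c (k k' : chan) (P : proc) : proc :=
  match P with
  | Nil => Nil
  | Pre p Q => Pre (ren_c_pref k k' p) (ren_c k k' Q)
  | Par Q R => Par (ren_c k k' Q) (ren_c k k' R)
  | Res c Q => Res (ren_c_chan k k' c) (ren_c k k' Q)
  | Rep Q => Rep (ren_c k k' Q)
  end.

Definition ren_v_var (x x' y : var) : var := if Nat.eqb y x then x' else y.

Definition ren_v_name (x x' : var) (a : name) : name :=
  match a with
  | NV y => NV (ren_v_var x x' y)
  | NC c => NC c
  end.

Fixpoint ren_v_pref (x x' : var) (p : prefix) : prefix :=
  match p with
  | POut a c => POut (ren_v_name x x' a) c
  | PIn a y => PIn (ren_v_name x x' a) (ren_v_var x x' y)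
  | PMatch a b q => PMatch (ren_v_name x x' a) (ren_v_name x x' b) (ren_v_pref x x' q)
  end.

Fixpoint ren_v (x x' : var) (P : proc) : proc :=
  match P with
  | Nil => Nil
  | Pre p Q => Pre (ren_v_pref x x' p) (ren_v x x' Q)
  | Par Q R => Par (ren_v x x' Q) (ren_v x x' R)
  | Res c Q => Res c (ren_v x x' Q)
  | Rep Q => Rep (ren_v x x' Q)
  end.

Fixpoint set_pbv (p : prefix) (x' : var) : prefix :=
  match p with
  | POut a c => POut a c
  | PIn a _ => PIn a x'
  | PMatch a b q => PMatch a b (set_pbv q x')
  end.

Inductive alpha : proc -> proc -> Prop :=
| al_refl : forall P, alpha P P
| al_sym : forall P Q, alpha P Q -> alpha Q P
| al_trans : forall P Q R, alpha P Q -> alpha Q R -> alpha P R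
| al_pre : forall p P Q, alpha P Q -> alpha (Pre p P) (Pre p Q)
| al_par : forall P P' Q Q', alpha P P' -> alpha Q Q' -> alpha (Par P Q) (Par P' Q')
| al_res : forall k P Q, alpha P Q -> alpha (Res k P) (Res k Q)
| al_rep : forall P Q, alpha P Q -> alpha (Rep P) (Rep Q)
| al_res_ren : forall k k' P, ~ occurs_c k' P ->
    alpha (Res k P) (Res k' (ren_c k k' P))
| al_in_ren : forall p x x' P, pbv p = Some x -> ~ occurs_v x' P ->
    alpha (Pre p P) (Pre (set_pbv p x') (ren_v x x' P)).

(* ---------- substitution P{l/x} of a channel for a variable ----------
   Replaces the free occurrences of x; it is capture-avoiding whenever l
   is not bound by a restriction in P (which is imposed in rule (in);
   together with the alpha rule this yields P{l/x} up to alpha). *)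
Definition subst_name (x : var) (l : chan) (a : name) : name :=
  match a with
  | NV y => if Nat.eqb y x then NC l else NV y
  | NC c => NC c
  end.

Fixpoint subst_pref (x : var) (l : chan) (p : prefix) : prefix :=
  match p with
  | POut a c => POut (subst_name x l a) c
  | PIn a y => PIn (subst_name x l a) y
  | PMatch a b q => PMatch (subst_name x l a) (subst_name x l b) (subst_pref x l q)
  end.

Fixpoint subst (P : proc) (x : var) (l : chan) : proc :=
  match P with
  | Nil => Nil
  | Pre p Q =>
      Pre (subst_pref x l p)
          (match pbv p with
           | Some y => if Nat.eqb y x then Q else subst Q x l
           | None => subst Q x l
           end)
  | Par Q R => Par (subst Q x l) (subst R x l)
  | Res c Q => Res c (subst Q x l)
  | Rep Q => Rep (subst Q x l)
  end.

Inductive act : Type :=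
| AOut : chan -> chan -> act
| AIn : chan -> chan -> act
| ABOut : chan -> chan -> act     (* (nu l) k<l>  : ABOut k l *)
| ATau : act.

Definition act_names (a : act) (c : chan) : Prop :=
  match a with
  | AOut k l | AIn k l | ABOut k l => c = k \/ c = l
  | ATau => False
  end.

Definition act_bn (a : act) (c : chan) : Prop :=
  match a with
  | ABOut _ l => c = l
  | _ => False
  end.

Inductive trans : proc -> act -> proc -> Prop :=
| t_out : forall k l P, trans (Pre (POut (NC k) l) P) (AOut k l) P
| t_in : forall k x l P, ~ chan_bound l P ->
    trans (Pre (PIn (NC k) x) P) (AIn k l) (subst P x l)
| t_match : forall a p P al P', trans (Pre p P) al P' ->
    trans (Pre (PMatch a a p) P) al P'
| t_res : forall k P al P', trans P al P' -> ~ act_names al k ->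
    trans (Res k P) al (Res k P')
| t_open : forall k l P Q, trans P (AOut k l) Q -> k <> l ->
    trans (Res l P) (ABOut k l) Q
| t_parl : forall P Q R al, trans P al Q -> (forall c, act_bn al c -> ~ free_chan c R) ->
    trans (Par P R) al (Par Q R)
| t_parr : forall P Q R al, trans P al Q -> (forall c, act_bn al c -> ~ free_chan c R) ->
    trans (Par R P) al (Par R Q)
| t_comml : forall P P' Q Q' k l, trans P (AOut k l) P' -> trans Q (AIn k l) Q' ->
    trans (Par P Q) ATau (Par P' Q')
| t_commr : forall P P' Q Q' k l, trans P (AIn k l) P' -> trans Q (AOut k l) Q' ->
    trans (Par P Q) ATau (Par P' Q')
| t_closel : forall P P' Q Q' k l, trans P (ABOut k l) P' -> trans Q (AIn k l) Q' ->
    ~ free_chan l Q -> trans (Par P Q) ATau (Res l (Par P' Q'))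
| t_closer : forall P P' Q Q' k l, trans P (AIn k l) P' -> trans Q (ABOut k l) Q' ->
    ~ free_chan l P -> trans (Par P Q) ATau (Res l (Par P' Q'))
| t_rep_act : forall P P' al, trans P al P' -> trans (Rep P) al (Par P' (Rep P))
| t_rep_comm : forall P P' P'' k l, trans P (AOut k l) P' -> trans P (AIn k l) P'' ->
    trans (Rep P) ATau (Par (Par P' P'') (Rep P))
| t_rep_close : forall P P' P'' k l, trans P (ABOut k l) P' -> trans P (AIn k l) P'' ->
    ~ free_chan l P -> trans (Rep P) ATau (Par (Res l (Par P' P'')) (Rep P))
(* processes are identified up to alpha-conversion *)
| t_alpha : forall P P' al Q, alpha P P' -> trans P' al Q -> trans P al Q.

Definition is_bisim (R : proc -> proc -> Prop) : Prop :=
  (forall P Q, R P Q -> R Q P) /\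
  (forall P Q, R P Q -> forall al P', trans P al P' ->
     (forall c, act_bn al c -> ~ free_chan c Q) ->
     exists Q', trans Q al Q' /\ R P' Q').

Definition bisim (P Q : proc) : Prop := exists R, is_bisim R /\ R P Q.

(* Main.v *)
Require Import Defs.
From Stdlib Require Import Arith Lia List Bool.
Import ListNotations.


Definition mapc_name (f : chan -> chan) (a : name) : name :=
  match a with NC c => NC (f c) | NV y => NV y end.
Fixpoint mapc_pref (f : chan -> chan) (p : prefix) : prefix :=
  match p with
  | POut a c => POut (mapc_name f a) (f c)
  | PIn a y => PIn (mapc_name f a) y
  | PMatch a b q => PMatch (mapc_name f a) (mapc_name f b) (mapc_pref f q)
  end.
Fixpoint mapc (f : chan -> chan) (P : proc) : proc :=
  match P with
  | Nil => Nil
  | Pre p Q => Pre (mapc_pref f p) (mapc f Q)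
  | Par Q R => Par (mapc f Q) (mapc f R)
  | Res c Q => Res (f c) (mapc f Q)
  | Rep Q => Rep (mapc f Q)
  end.

Definition mapv_name (g : var -> var) (a : name) : name :=
  match a with NV y => NV (g y) | NC c => NC c end.
Fixpoint mapv_pref (g : var -> var) (p : prefix) : prefix :=
  match p with
  | POut a c => POut (mapv_name g a) c
  | PIn a y => PIn (mapv_name g a) (g y)
  | PMatch a b q => PMatch (mapv_name g a) (mapv_name g b) (mapv_pref g q)
  end.
Fixpoint mapv (g : var -> var) (P : proc) : proc :=
  match P with
  | Nil => Nil
  | Pre p Q => Pre (mapv_pref g p) (mapv g Q)
  | Par Q R => Par (mapv g Q) (mapv g R)
  | Res c Q => Res c (mapv g Q)
  | Rep Q => Rep (mapv g Q)
  end.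

Definition mapa (f : chan -> chan) (a : act) : act :=
  match a with
  | AOut k l => AOut (f k) (f l)
  | AIn k l => AIn (f k) (f l)
  | ABOut k l => ABOut (f k) (f l)
  | ATau => ATau
  end.

Definition sw (a b c : nat) : nat :=
  if Nat.eqb c a then b else if Nat.eqb c b then a else c.

Definition inj (f : nat -> nat) := forall a b, f a = f b -> a = b.

Lemma sw_l a b : sw a b a = b.
Proof. unfold sw. rewrite Nat.eqb_refl. auto. Qed.
Lemma sw_r a b : sw a b b = a.
Proof. unfold sw. destruct (Nat.eqb_spec b a); subst; auto. rewrite Nat.eqb_refl; auto. Qed.
Lemma sw_o a b c : c <> a -> c <> b -> sw a b c = c.
Proof. intros. unfold sw. destruct (Nat.eqb_spec c a); try lia. destruct (Nat.eqb_spec c b); lia. Qed.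
Ltac eqbdes := repeat (match goal with |- context [Nat.eqb ?x ?y] => is_var x; destruct (Nat.eqb_spec x y) end); try lia.
Lemma sw_inv a b c : sw a b (sw a b c) = c.
Proof. unfold sw. eqbdes. Qed.
Lemma sw_inj a b : inj (sw a b).
Proof. intros x y H. rewrite <- (sw_inv a b x), <- (sw_inv a b y), H. auto. Qed.
Lemma sw_sym a b c : sw a b c = sw b a c.
Proof. unfold sw. eqbdes. Qed.
Lemma sw_eq_iff a b c d : sw a b c = d <-> c = sw a b d.
Proof. split; intro H; subst; rewrite sw_inv; auto. Qed.

Ltac swsimp := unfold sw in *; repeat (match goal with
  | |- context [Nat.eqb ?x ?y] => destruct (Nat.eqb_spec x y)
  | H: context [Nat.eqb ?x ?y] |- _ => destruct (Nat.eqb_spec x y) end); subst; try lia.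

Lemma mapc_name_comp f g a : mapc_name f (mapc_name g a) = mapc_name (fun c => f (g c)) a.
Proof. destruct a; auto. Qed.
Lemma mapc_pref_comp f g p : mapc_pref f (mapc_pref g p) = mapc_pref (fun c => f (g c)) p.
Proof. induction p; simpl; rewrite ?mapc_name_comp; congruence. Qed.
Lemma mapc_comp f g P : mapc f (mapc g P) = mapc (fun c => f (g c)) P.
Proof. induction P; simpl; rewrite ?mapc_pref_comp; congruence. Qed.

Definition name_c (c : chan) (a : name) : Prop := a = NC c.

Lemma mapc_name_ext f g a : (forall c, a = NC c -> f c = g c) -> mapc_name f a = mapc_name g a.
Proof. destruct a; simpl; intros H; auto; rewrite H; auto. Qed.
Lemma mapc_pref_ext f g p : (forall c, pchan c p -> f c = g c) -> mapc_pref f p = mapc_pref g p.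
Proof. induction p; simpl; intros H; f_equal; try apply mapc_name_ext; intros; try apply IHp; intros; apply H; auto.
Qed.
Lemma mapc_ext f g P : (forall c, occurs_c c P -> f c = g c) -> mapc f P = mapc g P.
Proof. induction P; simpl; intros H; try reflexivity; f_equal; try apply mapc_pref_ext; try apply IHP; try apply IHP1; try apply IHP2; intros; apply H; auto.
Qed.
Lemma mapc_id f P : (forall c, occurs_c c P -> f c = c) -> mapc f P = P.
Proof. intros H. transitivity (mapc (fun c => c) P). apply mapc_ext; auto.
  clear H; induction P; simpl; try congruence.
  - f_equal; auto. induction p; simpl; try destruct n; try destruct n0; simpl; congruence.
Qed.

Lemma mapv_name_comp f g a : mapv_name f (mapv_name g a) = mapv_name (fun c => f (g c)) a.
Proof. destruct a; auto. Qed.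
Lemma mapv_pref_comp f g p : mapv_pref f (mapv_pref g p) = mapv_pref (fun c => f (g c)) p.
Proof. induction p; simpl; rewrite ?mapv_name_comp; congruence. Qed.
Lemma mapv_comp f g P : mapv f (mapv g P) = mapv (fun c => f (g c)) P.
Proof. induction P; simpl; rewrite ?mapv_pref_comp; congruence. Qed.
Lemma mapv_name_ext f g a : (forall c, a = NV c -> f c = g c) -> mapv_name f a = mapv_name g a.
Proof. destruct a; simpl; intros H; auto; rewrite H; auto. Qed.
Lemma mapv_pref_ext f g p : (forall c, pvar c p -> f c = g c) -> mapv_pref f p = mapv_pref g p.
Proof. induction p; simpl; intros H; f_equal; try apply mapv_name_ext; intros; try apply IHp; intros; apply H; auto.
Qed.
Lemma mapv_ext f g P : (forall c, occurs_v c P -> f c = g c) -> mapv f P = mapv g P.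
Proof. induction P; simpl; intros H; try reflexivity; f_equal; try apply mapv_pref_ext; try apply IHP; try apply IHP1; try apply IHP2; intros; apply H; auto.
Qed.
Lemma mapv_id f P : (forall c, occurs_v c P -> f c = c) -> mapv f P = P.
Proof. intros H. transitivity (mapv (fun c => c) P). apply mapv_ext; auto.
  clear H; induction P; simpl; try congruence.
  - f_equal; auto. induction p; simpl; try destruct n; try destruct n0; simpl; congruence.
Qed.

Lemma mapc_mapv f g P : mapc f (mapv g P) = mapv g (mapc f P).
Proof. induction P; simpl; try congruence. f_equal; auto.
  induction p; simpl; try destruct n; try destruct n0; simpl; congruence. Qed.

Lemma ren_c_mapc k k' P : ren_c k k' P = mapc (ren_c_chan k k') P.
Proof. induction P; simpl; try congruence. f_equal; auto.
  induction p; simpl; try destruct n; try destruct n0; simpl; congruence. Qed.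
Lemma ren_v_mapv x x' P : ren_v x x' P = mapv (ren_v_var x x') P.
Proof. induction P; simpl; try congruence. f_equal; auto.
  induction p; simpl; try destruct n; try destruct n0; simpl; congruence. Qed.

Lemma ren_c_sw k k' P : ~ occurs_c k' P -> ren_c k k' P = mapc (sw k k') P.
Proof. intros H. rewrite ren_c_mapc. apply mapc_ext. intros c Hc.
  unfold ren_c_chan, sw. destruct (Nat.eqb_spec c k); auto.
  destruct (Nat.eqb_spec c k'); subst; tauto. Qed.
Lemma ren_v_sw x x' P : ~ occurs_v x' P -> ren_v x x' P = mapv (sw x x') P.
Proof. intros H. rewrite ren_v_mapv. apply mapv_ext. intros c Hc.
  unfold ren_v_var, sw. destruct (Nat.eqb_spec c x); auto.
  destruct (Nat.eqb_spec c x'); subst; tauto. Qed.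

Fixpoint size (P : proc) : nat :=
  match P with
  | Nil => 1
  | Pre _ Q => S (size Q)
  | Par Q R => S (size Q + size R)
  | Res _ Q => S (size Q)
  | Rep Q => S (size Q)
  end.
Lemma size_mapc f P : size (mapc f P) = size P.
Proof. induction P; simpl; auto. Qed.
Lemma size_mapv f P : size (mapv f P) = size P.
Proof. induction P; simpl; auto. Qed.
Lemma size_pos P : 1 <= size P.
Proof. destruct P; simpl; lia. Qed.


Fixpoint pfo (c : chan) (p : prefix) : Prop :=
  match p with POut _ d => d = c | PIn _ _ => False | PMatch _ _ q => pfo c q end.
Fixpoint fo (c : chan) (P : proc) : Prop :=
  match P with
  | Nil => False
  | Pre p Q => pfo c p \/ fo c Q
  | Par Q R => fo c Q \/ fo c R
  | Res k Q => k <> c /\ fo c Q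
  | Rep Q => fo c Q
  end.
Fixpoint pfv (x : var) (p : prefix) : Prop :=
  match p with
  | POut a _ => a = NV x
  | PIn a _ => a = NV x
  | PMatch a b q => a = NV x \/ b = NV x \/ pfv x q
  end.
Fixpoint fv (x : var) (P : proc) : Prop :=
  match P with
  | Nil => False
  | Pre p Q => pfv x p \/ (fv x Q /\ pbv p <> Some x)
  | Par Q R => fv x Q \/ fv x R
  | Res _ Q => fv x Q
  | Rep Q => fv x Q
  end.

Lemma pfo_pchan c p : pfo c p -> pchan c p.
Proof. induction p; simpl; intuition. Qed.
Lemma fo_free c P : fo c P -> free_chan c P.
Proof. induction P; simpl; intuition; auto using pfo_pchan. Qed.
Lemma free_occ c P : free_chan c P -> occurs_c c P.
Proof. induction P; simpl; intuition. Qed.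
Lemma cb_occ c P : chan_bound c P -> occurs_c c P.
Proof. induction P; simpl; intuition. Qed.
Lemma pfv_pvar x p : pfv x p -> pvar x p.
Proof. induction p; simpl; intuition. Qed.
Lemma fv_occ x P : fv x P -> occurs_v x P.
Proof. induction P; simpl; intuition; auto using pfv_pvar. Qed.

Lemma set_pbv_id p x : pbv p = Some x -> set_pbv p x = p.
Proof. induction p; simpl; intros H; try discriminate; try congruence. rewrite IHp; auto. Qed.
Lemma set_pbv_set p x y : set_pbv (set_pbv p x) y = set_pbv p y.
Proof. induction p; simpl; congruence. Qed.
Lemma pbv_set p x z : pbv p = Some z -> pbv (set_pbv p x) = Some x.
Proof. induction p; simpl; intros; try discriminate; auto. Qed.
Lemma pbv_set_none p x : pbv p = None -> set_pbv p x = p.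
Proof. induction p; simpl; intros; try discriminate; auto. rewrite IHp; auto. Qed.
Lemma pchan_set c p x : pchan c (set_pbv p x) <-> pchan c p.
Proof. induction p; simpl; tauto. Qed.
Lemma pfo_set c p x : pfo c (set_pbv p x) <-> pfo c p.
Proof. induction p; simpl; tauto. Qed.
Lemma pfv_set z p x : pfv z (set_pbv p x) <-> pfv z p.
Proof. induction p; simpl; tauto. Qed.

Section CMap.
Variable f : chan -> chan.
Hypothesis Hf : inj f.

Lemma mapc_name_NC c a : mapc_name f a = NC (f c) <-> a = NC c.
Proof. destruct a as [y|c0]; simpl; split; intro H; try discriminate.
  - inversion H as [H1]. apply Hf in H1. subst. reflexivity.
  - inversion H; subst; reflexivity. Qed.
Lemma pchan_mapc c p : pchan (f c) (mapc_pref f p) <-> pchan c p.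
Proof. induction p; simpl; rewrite ?mapc_name_NC; try rewrite IHp; try tauto.
  assert (f c0 = f c <-> c0 = c) by (split; intro; subst; auto). tauto. Qed.
Lemma pfo_mapc c p : pfo (f c) (mapc_pref f p) <-> pfo c p.
Proof. induction p; simpl; try tauto. split; intro H; subst; auto. Qed.
Lemma free_mapc c P : free_chan (f c) (mapc f P) <-> free_chan c P.
Proof. induction P; simpl; rewrite ?pchan_mapc; try tauto.
  rewrite IHP. split; intros [H1 H2]; split; auto; intro; subst; auto. Qed.
Lemma occ_mapc c P : occurs_c (f c) (mapc f P) <-> occurs_c c P.
Proof. induction P; simpl; rewrite ?pchan_mapc; try tauto.
  rewrite IHP. split; intros [H|H]; auto; left; subst; auto. Qed.
Lemma cb_mapc c P : chan_bound (f c) (mapc f P) <-> chan_bound c P.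
Proof. induction P; simpl; try tauto.
  rewrite IHP. split; intros [H|H]; auto; left; subst; auto. Qed.
Lemma fo_mapc c P : fo (f c) (mapc f P) <-> fo c P.
Proof. induction P; simpl; rewrite ?pfo_mapc; try tauto.
  rewrite IHP. split; intros [H1 H2]; split; auto; intro; subst; auto. Qed.
End CMap.

Lemma name_mapc_ex f c a : mapc_name f a = NC c -> exists c0, a = NC c0 /\ c = f c0.
Proof. destruct a; simpl; intro H; inversion H; eauto. Qed.
Lemma pchan_mapc_ex f c p : pchan c (mapc_pref f p) -> exists c0, pchan c0 p /\ c = f c0.
Proof. induction p; simpl; intros H.
  - destruct H as [H|H]. apply name_mapc_ex in H; destruct H as [c1 [-> ->]]; exists c1; auto.
    exists c0; auto.
  - apply name_mapc_ex in H; destruct H as [c0 [-> ->]]; exists c0; auto.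
  - destruct H as [H|[H|H]].
    + apply name_mapc_ex in H; destruct H as [c0 [-> ->]]; exists c0; auto.
    + apply name_mapc_ex in H; destruct H as [c0 [-> ->]]; exists c0; auto.
    + destruct (IHp H) as [c0 [H1 H2]]; exists c0; auto.
Qed.
Lemma occ_mapc_ex f c P : occurs_c c (mapc f P) -> exists c0, occurs_c c0 P /\ c = f c0.
Proof. induction P; simpl; intros H; try tauto.
  - destruct H as [H|H].
    + destruct (pchan_mapc_ex f c p H) as [c9 [? ?]]; exists c9; auto.
    + destruct (IHP H) as [c9 [H1 H2]]; exists c9; auto.
  - destruct H as [H|H]; [destruct (IHP1 H) as [c9 [? ?]]|destruct (IHP2 H) as [c9 [? ?]]]; exists c9; auto.
  - destruct H as [H|H]; [subst; eexists; split; [left; reflexivity|reflexivity]|destruct (IHP H) as [c9 [? ?]]; exists c9; auto].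
Qed.

Lemma pvar_mapc f x p : pvar x (mapc_pref f p) <-> pvar x p.
Proof. induction p; simpl; try destruct n; try destruct n0; simpl; split; intuition; try discriminate; congruence. Qed.
Lemma occv_mapc f x P : occurs_v x (mapc f P) <-> occurs_v x P.
Proof. induction P; simpl; rewrite ?pvar_mapc; tauto. Qed.
Lemma pfv_mapc f x p : pfv x (mapc_pref f p) <-> pfv x p.
Proof. induction p; simpl; try destruct n; try destruct n0; simpl; split; intuition; try discriminate; congruence. Qed.
Lemma pbv_mapc f p : pbv (mapc_pref f p) = pbv p.
Proof. induction p; simpl; auto. Qed.
Lemma fv_mapc f x P : fv x (mapc f P) <-> fv x P.
Proof. induction P; simpl; rewrite ?pfv_mapc, ?pbv_mapc; tauto. Qed.
Lemma set_pbv_mapc f p x : set_pbv (mapc_pref f p) x = mapc_pref f (set_pbv p x).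
Proof. induction p; simpl; congruence. Qed.
Lemma mapc_subst f P x c : mapc f (subst P x c) = subst (mapc f P) x (f c).
Proof. induction P; simpl; try congruence.
  rewrite pbv_mapc. f_equal.
  - induction p; simpl; try destruct n; try destruct n0; simpl;
    repeat (match goal with |- context [Nat.eqb ?a ?b] => destruct (Nat.eqb a b) end); simpl; congruence.
  - destruct (pbv p); try destruct (Nat.eqb v x); auto.
Qed.

Lemma pchan_mapv g c p : pchan c (mapv_pref g p) <-> pchan c p.
Proof. induction p; simpl; try destruct n; try destruct n0; simpl; split; intuition; try discriminate; congruence. Qed.
Lemma free_mapv g c P : free_chan c (mapv g P) <-> free_chan c P.
Proof. induction P; simpl; rewrite ?pchan_mapv; tauto. Qed.
Lemma occ_mapv g c P : occurs_c c (mapv g P) <-> occurs_c c P.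
Proof. induction P; simpl; rewrite ?pchan_mapv; tauto. Qed.
Lemma cb_mapv g c P : chan_bound c (mapv g P) <-> chan_bound c P.
Proof. induction P; simpl; tauto. Qed.
Lemma pfo_mapv g c p : pfo c (mapv_pref g p) <-> pfo c p.
Proof. induction p; simpl; tauto. Qed.
Lemma fo_mapv g c P : fo c (mapv g P) <-> fo c P.
Proof. induction P; simpl; rewrite ?pfo_mapv; tauto. Qed.
Lemma pbv_mapv g p : pbv (mapv_pref g p) = option_map g (pbv p).
Proof. induction p; simpl; auto. Qed.

Section VMap.
Variable g : var -> var.
Hypothesis Hg : inj g.
Lemma mapv_name_NV x a : mapv_name g a = NV (g x) <-> a = NV x.
Proof. destruct a as [y|c0]; simpl; split; intro H; try discriminate.
  - inversion H as [H1]. apply Hg in H1. subst. reflexivity.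
  - inversion H; subst; reflexivity. Qed.
Lemma pvar_mapv x p : pvar (g x) (mapv_pref g p) <-> pvar x p.
Proof. induction p; simpl; rewrite ?mapv_name_NV; try tauto.
  split; intros [H|H]; auto; right; try apply Hg; auto; subst; auto. Qed.
Lemma occv_mapv x P : occurs_v (g x) (mapv g P) <-> occurs_v x P.
Proof. induction P; simpl; rewrite ?pvar_mapv; tauto. Qed.
Lemma pfv_mapv x p : pfv (g x) (mapv_pref g p) <-> pfv x p.
Proof. induction p; simpl; rewrite ?mapv_name_NV; tauto. Qed.
Lemma fv_mapv x P : fv (g x) (mapv g P) <-> fv x P.
Proof. induction P; simpl; rewrite ?pfv_mapv, ?pbv_mapv; try tauto.
  rewrite IHP. destruct (pbv p) as [v|]; simpl;
  [| assert (None = Some (g x) <-> @None var = Some x) by (split; discriminate); tauto].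
  assert (E: Some (g v) = Some (g x) <-> Some v = Some x).
  { split; intro Hc; inversion Hc as [H1]; [apply Hg in H1|]; subst; auto. }
  tauto.
Qed.
Lemma set_pbv_mapv p x : set_pbv (mapv_pref g p) (g x) = mapv_pref g (set_pbv p x).
Proof. induction p; simpl; congruence. Qed.
Lemma mapv_subst_name a x c : mapv_name g (subst_name x c a) = subst_name (g x) c (mapv_name g a).
Proof. destruct a as [v|]; simpl; auto.
  destruct (Nat.eqb_spec v x); destruct (Nat.eqb_spec (g v) (g x)); subst; simpl; auto.
  - congruence.
  - apply Hg in e; congruence. Qed.
Lemma mapv_subst_pref p x c : mapv_pref g (subst_pref x c p) = subst_pref (g x) c (mapv_pref g p).
Proof. induction p; simpl; rewrite ?mapv_subst_name; congruence. Qed.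
Lemma mapv_subst P x c : mapv g (subst P x c) = subst (mapv g P) (g x) c.
Proof. induction P; simpl; try congruence.
  rewrite pbv_mapv. f_equal.
  - apply mapv_subst_pref.
  - destruct (pbv p); simpl; auto.
    destruct (Nat.eqb_spec v x); destruct (Nat.eqb_spec (g v) (g x)); subst; auto.
    + congruence.
    + apply Hg in e; congruence.
Qed.
End VMap.

Lemma mapv_nil g P : mapv g P = Nil -> P = Nil.
Proof. destruct P; simpl; congruence. Qed.
Lemma mapc_nil f P : mapc f P = Nil -> P = Nil.
Proof. destruct P; simpl; congruence. Qed.

Lemma pbv_subst x l p : pbv (subst_pref x l p) = pbv p.
Proof. induction p; simpl; auto. Qed.
Lemma set_pbv_subst x l p y : set_pbv (subst_pref x l p) y = subst_pref x l (set_pbv p y).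
Proof. induction p; simpl; congruence. Qed.
Lemma pfo_subst x l c p : pfo c (subst_pref x l p) <-> pfo c p.
Proof. induction p; simpl; tauto. Qed.

Ltac subst_cont := match goal with |- context [match pbv ?p with _ => _ end] =>
   destruct (pbv p) as [?v|]; [destruct (Nat.eqb _ _)|] end.

Lemma fo_subst c P x l : fo c (subst P x l) <-> fo c P.
Proof. induction P; simpl; rewrite ?pfo_subst; try tauto.
  destruct (pbv p) as [v|]; [destruct (Nat.eqb v x)|]; rewrite ?IHP; tauto. Qed.
Lemma cb_subst c P x l : chan_bound c (subst P x l) <-> chan_bound c P.
Proof. induction P; simpl; try tauto.
  destruct (pbv p) as [v|]; [destruct (Nat.eqb v x)|]; rewrite ?IHP; tauto. Qed.
Lemma subst_name_c c x l a : subst_name x l a = NC c -> a = NC c \/ c = l.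
Proof. destruct a; simpl; auto. destruct (Nat.eqb v x); intro H; inversion H; auto. Qed.
Lemma pchan_subst c x l p : pchan c (subst_pref x l p) -> pchan c p \/ c = l.
Proof. induction p; simpl; intros H.
  - destruct H as [H|H]; auto. apply subst_name_c in H; tauto.
  - apply subst_name_c in H; tauto.
  - destruct H as [H|[H|H]]; [apply subst_name_c in H|apply subst_name_c in H|apply IHp in H]; tauto.
Qed.
Lemma free_subst c P x l : free_chan c (subst P x l) -> free_chan c P \/ c = l.
Proof. induction P; simpl; intros H; try tauto;
  try (destruct H as [H|H]; [apply pchan_subst in H; tauto|];
       destruct (pbv p) as [v|]; [destruct (Nat.eqb v x)|]; try apply IHP in H; tauto);
  try (destruct H as [H1 H2]; apply IHP in H2; tauto).
Qed.
Lemma occ_subst c P x l : occurs_c c (subst P x l) -> occurs_c c P \/ c = l.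
Proof. induction P; simpl; intros H; try tauto;
  try (destruct H as [H|H]; [apply pchan_subst in H; tauto|];
       destruct (pbv p) as [v|]; [destruct (Nat.eqb v x)|]; try apply IHP in H; tauto).
Qed.
Lemma pvar_subst z x l p : pvar z (subst_pref x l p) -> pvar z p.
Proof. induction p; simpl; try destruct n; try destruct n0; simpl;
  repeat (match goal with |- context [Nat.eqb ?a ?b] => destruct (Nat.eqb a b) end); simpl; intuition; try discriminate. Qed.
Lemma occv_subst z P x l : occurs_v z (subst P x l) -> occurs_v z P.
Proof. induction P; simpl; intros H; try tauto;
  try (destruct H as [H|H]; [apply pvar_subst in H; tauto|];
       destruct (pbv p) as [v|]; [destruct (Nat.eqb v x)|]; try apply IHP in H; tauto).
Qed.
Lemma size_subst P x l : size (subst P x l) = size P.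
Proof. induction P; simpl; auto. destruct (pbv p) as [v|]; [destruct (Nat.eqb v x)|]; auto. Qed.
Lemma subst_pref_notfree x l p : ~ pfv x p -> subst_pref x l p = p.
Proof. induction p; simpl; intros H; try destruct n; try destruct n0; simpl in *;
  repeat (match goal with |- context [Nat.eqb ?a ?b] => destruct (Nat.eqb_spec a b) end); subst; try tauto;
  try rewrite IHp; auto. Qed.
Lemma subst_notfree x l P : ~ fv x P -> subst P x l = P.
Proof. induction P; simpl; intros H; auto.
  - rewrite subst_pref_notfree by tauto. f_equal.
    destruct (pbv p) as [v|] eqn:E; [destruct (Nat.eqb_spec v x)|]; subst; auto;
    apply IHP; intro; apply H; right; split; auto; congruence.
  - f_equal; auto.
  - f_equal; auto.
  - f_equal; auto.
Qed.


Definition nchans (a : name) : list chan := match a with NC c => [c] | NV _ => [] end.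
Definition nvars (a : name) : list var := match a with NV c => [c] | NC _ => [] end.
Fixpoint pchans (p : prefix) : list chan :=
  match p with
  | POut a c => c :: nchans a
  | PIn a _ => nchans a
  | PMatch a b q => nchans a ++ nchans b ++ pchans q
  end.
Fixpoint pvars (p : prefix) : list var :=
  match p with
  | POut a c => nvars a
  | PIn a y => y :: nvars a
  | PMatch a b q => nvars a ++ nvars b ++ pvars q
  end.
Fixpoint chans (P : proc) : list chan :=
  match P with
  | Nil => []
  | Pre p Q => pchans p ++ chans Q
  | Par Q R => chans Q ++ chans R
  | Res k Q => k :: chans Q
  | Rep Q => chans Q
  end.
Fixpoint vars (P : proc) : list var :=
  match P with
  | Nil => []
  | Pre p Q => pvars p ++ vars Q
  | Par Q R => vars Q ++ vars R
  | Res k Q => vars Q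
  | Rep Q => vars Q
  end.
Lemma nchans_in c a : a = NC c -> In c (nchans a).
Proof. intros ->; simpl; auto. Qed.
Lemma nvars_in c a : a = NV c -> In c (nvars a).
Proof. intros ->; simpl; auto. Qed.
Lemma pchans_in c p : pchan c p -> In c (pchans p).
Proof. induction p; simpl; intros H; rewrite ?in_app_iff.
  - destruct H as [H|H]; [right; apply nchans_in; auto|left; auto].
  - apply nchans_in; auto.
  - destruct H as [H|[H|H]]; [left; apply nchans_in|right;left; apply nchans_in|right;right]; auto.
Qed.
Lemma pvars_in c p : pvar c p -> In c (pvars p).
Proof. induction p; simpl; intros H; rewrite ?in_app_iff.
  - apply nvars_in; auto.
  - destruct H as [H|H]; [right; apply nvars_in; auto|left; auto].
  - destruct H as [H|[H|H]]; [left; apply nvars_in|right;left; apply nvars_in|right;right]; auto.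
Qed.
Lemma occ_chans c P : occurs_c c P -> In c (chans P).
Proof. induction P; simpl; intros H; rewrite ?in_app_iff; try tauto.
  - destruct H as [H|H]; [left; apply pchans_in|right]; auto.
Qed.
Lemma occ_vars x P : occurs_v x P -> In x (vars P).
Proof. induction P; simpl; intros H; rewrite ?in_app_iff; try tauto.
  - destruct H as [H|H]; [left; apply pvars_in|right]; auto.
Qed.

Lemma fresh_nat (l : list nat) : exists z, ~ In z l.
Proof. exists (S (list_max l)). intro H.
  assert (F: Forall (fun k => k <= list_max l) l) by (apply list_max_le; auto).
  rewrite Forall_forall in F. apply F in H. lia. Qed.

Lemma alpha_mapc f P Q : inj f -> alpha P Q -> alpha (mapc f P) (mapc f Q).
Proof. intros Hf H. induction H; simpl.
  - apply al_refl.
  - apply al_sym; auto.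
  - eapply al_trans; eauto.
  - apply al_pre; auto.
  - apply al_par; auto.
  - apply al_res; auto.
  - apply al_rep; auto.
  - assert (E: mapc f (ren_c k k' P) = ren_c (f k) (f k') (mapc f P)).
    { rewrite !ren_c_mapc, !mapc_comp. apply mapc_ext. intros c _.
      unfold ren_c_chan. destruct (Nat.eqb_spec c k); destruct (Nat.eqb_spec (f c) (f k)); subst; auto.
      - congruence.
      - apply Hf in e; congruence. }
    rewrite E. apply al_res_ren. rewrite occ_mapc; auto.
  - rewrite <- set_pbv_mapc, !ren_v_mapv, mapc_mapv, <- ren_v_mapv.
    apply al_in_ren. rewrite pbv_mapc; auto. rewrite occv_mapc; auto.
Qed.

Lemma alpha_mapv g P Q : inj g -> alpha P Q -> alpha (mapv g P) (mapv g Q).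
Proof. intros Hg H. induction H; simpl.
  - apply al_refl.
  - apply al_sym; auto.
  - eapply al_trans; eauto.
  - apply al_pre; auto.
  - apply al_par; auto.
  - apply al_res; auto.
  - apply al_rep; auto.
  - rewrite ren_c_mapc, <- mapc_mapv, <- ren_c_mapc. apply al_res_ren. rewrite occ_mapv; auto.
  - assert (E: mapv g (ren_v x x' P) = ren_v (g x) (g x') (mapv g P)).
    { rewrite !ren_v_mapv, !mapv_comp. apply mapv_ext. intros c _.
      unfold ren_v_var. destruct (Nat.eqb_spec c x); destruct (Nat.eqb_spec (g c) (g x)); subst; auto.
      - congruence.
      - apply Hg in e; congruence. }
    rewrite E, <- set_pbv_mapv by auto. apply al_in_ren.
    rewrite pbv_mapv, H; auto. rewrite occv_mapv; auto.
Qed.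

Lemma alpha_sw a b P Q : alpha P Q -> alpha (mapc (sw a b) P) (mapc (sw a b) Q).
Proof. apply alpha_mapc, sw_inj. Qed.
Lemma alpha_swv a b P Q : alpha P Q -> alpha (mapv (sw a b) P) (mapv (sw a b) Q).
Proof. apply alpha_mapv, sw_inj. Qed.

Lemma sw_mapc_inv a b P : mapc (sw a b) (mapc (sw a b) P) = P.
Proof. rewrite mapc_comp. apply mapc_id. intros; apply sw_inv. Qed.
Lemma sw_mapv_inv a b P : mapv (sw a b) (mapv (sw a b) P) = P.
Proof. rewrite mapv_comp. apply mapv_id. intros; apply sw_inv. Qed.

Lemma free_sw a b c P : free_chan c (mapc (sw a b) P) <-> free_chan (sw a b c) P.
Proof. rewrite <- (free_mapc (sw a b) (sw_inj a b) (sw a b c) P), sw_inv. tauto. Qed.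
Lemma occ_sw a b c P : occurs_c c (mapc (sw a b) P) <-> occurs_c (sw a b c) P.
Proof. rewrite <- (occ_mapc (sw a b) (sw_inj a b) (sw a b c) P), sw_inv. tauto. Qed.
Lemma cb_sw a b c P : chan_bound c (mapc (sw a b) P) <-> chan_bound (sw a b c) P.
Proof. rewrite <- (cb_mapc (sw a b) (sw_inj a b) (sw a b c) P), sw_inv. tauto. Qed.
Lemma fo_sw a b c P : fo c (mapc (sw a b) P) <-> fo (sw a b c) P.
Proof. rewrite <- (fo_mapc (sw a b) (sw_inj a b) (sw a b c) P), sw_inv. tauto. Qed.
Lemma fv_swv a b x P : fv x (mapv (sw a b) P) <-> fv (sw a b x) P.
Proof. rewrite <- (fv_mapv (sw a b) (sw_inj a b) (sw a b x) P), sw_inv. tauto. Qed.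
Lemma occv_swv a b x P : occurs_v x (mapv (sw a b) P) <-> occurs_v (sw a b x) P.
Proof. rewrite <- (occv_mapv (sw a b) (sw_inj a b) (sw a b x) P), sw_inv. tauto. Qed.

Lemma alpha_free c P Q : alpha P Q -> (free_chan c P <-> free_chan c Q).
Proof. intros H. induction H; simpl; try tauto.
  - rewrite ren_c_sw by auto. rewrite free_sw.
    assert (~ free_chan k' P) by (intro; apply H; apply free_occ; auto).
    unfold sw; destruct (Nat.eqb_spec c k); destruct (Nat.eqb_spec c k'); subst; try tauto.
    split; intros [A B]; split; auto.
  - rewrite pchan_set, ren_v_mapv, free_mapv. tauto.
Qed.
Lemma alpha_fo c P Q : alpha P Q -> (fo c P <-> fo c Q).
Proof. intros H. induction H; simpl; try tauto.
  - rewrite ren_c_sw by auto. rewrite fo_sw.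
    assert (~ fo k' P) by (intro; apply H; apply free_occ, fo_free; auto).
    unfold sw; destruct (Nat.eqb_spec c k); destruct (Nat.eqb_spec c k'); subst; try tauto.
    split; intros [A B]; split; auto.
  - rewrite pfo_set, ren_v_mapv, fo_mapv. tauto.
Qed.
Lemma alpha_fv z P Q : alpha P Q -> (fv z P <-> fv z Q).
Proof. intros H. induction H; simpl; try tauto.
  - rewrite ren_c_mapc, fv_mapc; tauto.
  - rewrite pfv_set, ren_v_sw by auto. rewrite fv_swv, (pbv_set p x' x) by auto. rewrite H.
    assert (~ fv x' P) by (intro; apply H0; apply fv_occ; auto).
    unfold sw; destruct (Nat.eqb_spec z x); destruct (Nat.eqb_spec z x'); subst; try tauto.
    assert (Some x <> Some z) by congruence. assert (Some x' <> Some z) by congruence. tauto.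
Qed.
Lemma alpha_size P Q : alpha P Q -> size P = size Q.
Proof. intros H; induction H; simpl; auto; try lia.
  rewrite ren_c_mapc, size_mapc; auto. rewrite ren_v_mapv, size_mapv; auto. Qed.

Lemma alpha_nil P Q : alpha P Q -> (P = Nil <-> Q = Nil).
Proof. intros H; induction H; try tauto; split; intro E; discriminate. Qed.
Lemma alpha_nil_l Q : alpha Nil Q -> Q = Nil.
Proof. intros H; apply (alpha_nil _ _ H); auto. Qed.
Lemma alpha_nil_r Q : alpha Q Nil -> Q = Nil.
Proof. intros H; apply (alpha_nil _ _ H); auto. Qed.

Definition ParRel X Y := forall P Q, X = Par P Q -> exists P' Q', Y = Par P' Q' /\ alpha P P' /\ alpha Q Q'.
Lemma alpha_par_gen X Y : alpha X Y -> ParRel X Y /\ ParRel Y X.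
Proof. intros H; induction H; unfold ParRel in *; split; intros P0 Q0 E; try discriminate.
  - subst; eauto 6 using al_refl.
  - subst; eauto 6 using al_refl.
  - destruct IHalpha as [_ H2]; auto.
  - destruct IHalpha as [H2 _]; auto.
  - destruct IHalpha1 as [A1 B1]; destruct IHalpha2 as [A2 B2].
    destruct (A1 _ _ E) as [P1 [Q1 [E1 [H3 H4]]]]. destruct (A2 _ _ E1) as [P2 [Q2 [E2 [H5 H6]]]].
    exists P2, Q2; split; auto; split; eapply al_trans; eauto.
  - destruct IHalpha1 as [A1 B1]; destruct IHalpha2 as [A2 B2].
    destruct (B2 _ _ E) as [P1 [Q1 [E1 [H3 H4]]]]. destruct (B1 _ _ E1) as [P2 [Q2 [E2 [H5 H6]]]].
    exists P2, Q2; split; auto; split; eapply al_trans; eauto.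
  - inversion E; subst. exists P', Q'; auto.
  - inversion E; subst. exists P, Q; split; auto; split; apply al_sym; auto.
Qed.
Lemma alpha_par P Q Y : alpha (Par P Q) Y -> exists P' Q', Y = Par P' Q' /\ alpha P P' /\ alpha Q Q'.
Proof. intros H. apply (proj1 (alpha_par_gen _ _ H)); auto. Qed.

Definition RepRel X Y := forall P, X = Rep P -> exists P', Y = Rep P' /\ alpha P P'.
Lemma alpha_rep_gen X Y : alpha X Y -> RepRel X Y /\ RepRel Y X.
Proof. intros H; induction H; unfold RepRel in *; split; intros P0 E; try discriminate.
  - subst; eauto using al_refl.
  - subst; eauto using al_refl.
  - destruct IHalpha as [_ H2]; auto.
  - destruct IHalpha as [H2 _]; auto.
  - destruct IHalpha1 as [A1 B1]; destruct IHalpha2 as [A2 B2].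
    destruct (A1 _ E) as [P1 [E1 H3]]. destruct (A2 _ E1) as [P2 [E2 H5]].
    exists P2; split; auto; eapply al_trans; eauto.
  - destruct IHalpha1 as [A1 B1]; destruct IHalpha2 as [A2 B2].
    destruct (B2 _ E) as [P1 [E1 H3]]. destruct (B1 _ E1) as [P2 [E2 H5]].
    exists P2; split; auto; eapply al_trans; eauto.
  - inversion E; subst. exists Q; auto.
  - inversion E; subst. exists P; split; auto; apply al_sym; auto.
Qed.
Lemma alpha_rep P Y : alpha (Rep P) Y -> exists P', Y = Rep P' /\ alpha P P'.
Proof. intros H. apply (proj1 (alpha_rep_gen _ _ H)); auto. Qed.


Ltac sws := repeat match goal with
 | |- context [sw ?a ?b ?c] => match c with context [sw _ _ _] => fail 1 | _ =>
      first [ rewrite (sw_l a b) | rewrite (sw_r a b) | rewrite (sw_o a b c) by (auto; lia) ] end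
 end.

Lemma alpha_res_sw k z P : ~ occurs_c z P -> alpha (Res k P) (Res z (mapc (sw k z) P)).
Proof. intros H. rewrite <- ren_c_sw by auto. apply al_res_ren; auto. Qed.
Lemma alpha_in_sw p x w P : pbv p = Some x -> ~ occurs_v w P ->
  alpha (Pre p P) (Pre (set_pbv p w) (mapv (sw x w) P)).
Proof. intros H1 H2. rewrite <- ren_v_sw by auto. apply al_in_ren; auto. Qed.

Lemma sw_comp_c z w k P : ~ occurs_c z P -> ~ occurs_c w P -> w <> k ->
  mapc (sw z w) (mapc (sw k w) P) = mapc (sw k z) P.
Proof. intros H1 H2 H3. rewrite mapc_comp. apply mapc_ext. intros c Hc.
  assert (c <> z) by (intro; subst; tauto). assert (c <> w) by (intro; subst; tauto).
  destruct (Nat.eq_dec c k); subst; sws; auto.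
Qed.
Lemma sw_comp_v z w k P : ~ occurs_v z P -> ~ occurs_v w P -> w <> k ->
  mapv (sw z w) (mapv (sw k w) P) = mapv (sw k z) P.
Proof. intros H1 H2 H3. rewrite mapv_comp. apply mapv_ext. intros c Hc.
  assert (c <> z) by (intro; subst; tauto). assert (c <> w) by (intro; subst; tauto).
  destruct (Nat.eq_dec c k); subst; sws; auto.
Qed.

Definition ResRel X Y := forall k P, X = Res k P -> exists k' P', Y = Res k' P' /\
  forall z, ~ occurs_c z P -> ~ occurs_c z P' -> alpha (mapc (sw k z) P) (mapc (sw k' z) P').

Lemma alpha_res_gen X Y : alpha X Y -> ResRel X Y /\ ResRel Y X.
Proof. intros H; induction H; unfold ResRel in *; split; intros k0 P0 E; try discriminate.
  - subst; exists k0, P0; split; auto; intros; apply al_refl.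
  - subst; exists k0, P0; split; auto; intros; apply al_refl.
  - destruct IHalpha as [_ H2]; auto.
  - destruct IHalpha as [H2 _]; auto.
  - destruct IHalpha1 as [A1 B1]; destruct IHalpha2 as [A2 B2].
    destruct (A1 _ _ E) as [k1 [P1 [E1 H3]]]. destruct (A2 _ _ E1) as [k2 [P2 [E2 H5]]].
    exists k2, P2; split; auto. intros z Hz1 Hz2.
    destruct (fresh_nat (z :: k0 :: k1 :: k2 :: chans P0 ++ chans P1 ++ chans P2)) as [w Hw].
    simpl in Hw; rewrite !in_app_iff in Hw.
    assert (~ occurs_c w P0) by (intro Hc; apply occ_chans in Hc; tauto).
    assert (~ occurs_c w P1) by (intro Hc; apply occ_chans in Hc; tauto).
    assert (~ occurs_c w P2) by (intro Hc; apply occ_chans in Hc; tauto).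
    assert (HH: alpha (mapc (sw k0 w) P0) (mapc (sw k2 w) P2)) by (eapply al_trans; eauto).
    apply (alpha_sw z w) in HH. rewrite !sw_comp_c in HH by (auto; intuition). auto.
  - destruct IHalpha1 as [A1 B1]; destruct IHalpha2 as [A2 B2].
    destruct (B2 _ _ E) as [k1 [P1 [E1 H3]]]. destruct (B1 _ _ E1) as [k2 [P2 [E2 H5]]].
    exists k2, P2; split; auto. intros z Hz1 Hz2.
    destruct (fresh_nat (z :: k0 :: k1 :: k2 :: chans P0 ++ chans P1 ++ chans P2)) as [w Hw].
    simpl in Hw; rewrite !in_app_iff in Hw.
    assert (~ occurs_c w P0) by (intro Hc; apply occ_chans in Hc; tauto).
    assert (~ occurs_c w P1) by (intro Hc; apply occ_chans in Hc; tauto).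
    assert (~ occurs_c w P2) by (intro Hc; apply occ_chans in Hc; tauto).
    assert (HH: alpha (mapc (sw k0 w) P0) (mapc (sw k2 w) P2)) by (eapply al_trans; eauto).
    apply (alpha_sw z w) in HH. rewrite !sw_comp_c in HH by (auto; intuition). auto.
  - inversion E; subst. exists k0, Q; split; auto; intros; apply alpha_sw; auto.
  - inversion E; subst. exists k0, P; split; auto; intros; apply alpha_sw, al_sym; auto.
  - inversion E; subst. exists k', (ren_c k0 k' P0); split; auto. intros z Hz1 Hz2.
    rewrite ren_c_sw by auto. rewrite mapc_comp.
    replace (mapc (fun c => sw k' z (sw k0 k' c)) P0) with (mapc (sw k0 z) P0). apply al_refl.
    apply mapc_ext. intros c Hc. assert (c <> z) by (intro; subst; tauto). assert (c <> k') by (intro; subst; tauto).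
    destruct (Nat.eq_dec c k0); subst; sws; auto.
  - inversion E; subst. exists k, P; split; auto. intros z Hz1 Hz2.
    rewrite ren_c_sw in * by auto. rewrite mapc_comp.
    replace (mapc (fun c => sw k0 z (sw k k0 c)) P) with (mapc (sw k z) P). apply al_refl.
    apply mapc_ext. intros c Hc. assert (c <> k0) by (intro; subst; tauto).
    assert (c <> z) by (intro; subst; tauto).
    destruct (Nat.eq_dec c k); subst; sws; auto.
Qed.

Lemma alpha_res k P Y : alpha (Res k P) Y -> exists k' P', Y = Res k' P' /\
  forall z, ~ occurs_c z P -> ~ occurs_c z P' -> alpha (mapc (sw k z) P) (mapc (sw k' z) P').
Proof. intros H. apply (proj1 (alpha_res_gen _ _ H)); auto. Qed.

Definition PreRel X Y := forall p P, X = Pre p P -> exists p' P', Y = Pre p' P' /\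
  ((pbv p = None /\ p' = p /\ alpha P P') \/
   (exists x x', pbv p = Some x /\ p' = set_pbv p x' /\
      forall w, ~ occurs_v w P -> ~ occurs_v w P' -> alpha (mapv (sw x w) P) (mapv (sw x' w) P'))).

Lemma alpha_pre_gen X Y : alpha X Y -> PreRel X Y /\ PreRel Y X.
Proof. intros H; induction H; unfold PreRel in *; split; intros p0 P0 E; try discriminate.
  - subst; exists p0, P0; split; auto. destruct (pbv p0) as [x|] eqn:Ep.
    + right; exists x, x; split; auto; split; [rewrite set_pbv_id; auto|intros; apply al_refl].
    + left; split; auto; split; auto; apply al_refl.
  - subst; exists p0, P0; split; auto. destruct (pbv p0) as [x|] eqn:Ep.
    + right; exists x, x; split; auto; split; [rewrite set_pbv_id; auto|intros; apply al_refl].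
    + left; split; auto; split; auto; apply al_refl.
  - destruct IHalpha as [_ H2]; auto.
  - destruct IHalpha as [H2 _]; auto.
  - destruct IHalpha1 as [A1 B1]; destruct IHalpha2 as [A2 B2].
    destruct (A1 _ _ E) as [p1 [P1 [E1 H3]]]. destruct (A2 _ _ E1) as [p2 [P2 [E2 H5]]].
    exists p2, P2; split; auto.
    destruct H3 as [[N1 [-> H3]]|[x [x1 [S1 [-> H3]]]]].
    + destruct H5 as [[N2 [-> H5]]|[x [x1 [S1 [-> H5]]]]]. left; split; auto; split; auto; eapply al_trans; eauto.
      congruence.
    + destruct H5 as [[N2 [-> H5]]|[x2 [x3 [S2 [-> H5]]]]].
      * erewrite pbv_set in N2; eauto; discriminate.
      * erewrite pbv_set in S2; eauto. inversion S2; subst x2.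
        right; exists x, x3; split; auto; split; [rewrite set_pbv_set; auto|].
        intros z Hz1 Hz2.
        destruct (fresh_nat (z :: x :: x1 :: x3 :: vars P0 ++ vars P1 ++ vars P2)) as [w Hw].
        simpl in Hw; rewrite !in_app_iff in Hw.
        assert (~ occurs_v w P0) by (intro Hc; apply occ_vars in Hc; tauto).
        assert (~ occurs_v w P1) by (intro Hc; apply occ_vars in Hc; tauto).
        assert (~ occurs_v w P2) by (intro Hc; apply occ_vars in Hc; tauto).
        assert (HH: alpha (mapv (sw x w) P0) (mapv (sw x3 w) P2)) by (eapply al_trans; eauto).
        apply (alpha_swv z w) in HH. rewrite !sw_comp_v in HH by (auto; intuition). auto.
  - destruct IHalpha1 as [A1 B1]; destruct IHalpha2 as [A2 B2].
    destruct (B2 _ _ E) as [p1 [P1 [E1 H3]]]. destruct (B1 _ _ E1) as [p2 [P2 [E2 H5]]].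
    exists p2, P2; split; auto.
    destruct H3 as [[N1 [-> H3]]|[x [x1 [S1 [-> H3]]]]].
    + destruct H5 as [[N2 [-> H5]]|[x [x1 [S1 [-> H5]]]]]. left; split; auto; split; auto; eapply al_trans; eauto.
      congruence.
    + destruct H5 as [[N2 [-> H5]]|[x2 [x3 [S2 [-> H5]]]]].
      * erewrite pbv_set in N2; eauto; discriminate.
      * erewrite pbv_set in S2; eauto. inversion S2; subst x2.
        right; exists x, x3; split; auto; split; [rewrite set_pbv_set; auto|].
        intros z Hz1 Hz2.
        destruct (fresh_nat (z :: x :: x1 :: x3 :: vars P0 ++ vars P1 ++ vars P2)) as [w Hw].
        simpl in Hw; rewrite !in_app_iff in Hw.
        assert (~ occurs_v w P0) by (intro Hc; apply occ_vars in Hc; tauto).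
        assert (~ occurs_v w P1) by (intro Hc; apply occ_vars in Hc; tauto).
        assert (~ occurs_v w P2) by (intro Hc; apply occ_vars in Hc; tauto).
        assert (HH: alpha (mapv (sw x w) P0) (mapv (sw x3 w) P2)) by (eapply al_trans; eauto).
        apply (alpha_swv z w) in HH. rewrite !sw_comp_v in HH by (auto; intuition). auto.
  - inversion E; subst. exists p0, Q; split; auto. destruct (pbv p0) as [x|] eqn:Ep.
    + right; exists x, x; split; auto; split; [rewrite set_pbv_id; auto|intros; apply alpha_swv; auto].
    + left; split; auto.
  - inversion E; subst. exists p0, P; split; auto. destruct (pbv p0) as [x|] eqn:Ep.
    + right; exists x, x; split; auto; split; [rewrite set_pbv_id; auto|intros; apply alpha_swv, al_sym; auto].
    + left; split; auto; split; auto; apply al_sym; auto.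
  - inversion E; subst. exists (set_pbv p0 x'), (ren_v x x' P0); split; auto.
    right; exists x, x'; split; auto; split; auto. intros z Hz1 Hz2.
    rewrite ren_v_sw by auto. rewrite mapv_comp.
    replace (mapv (fun c => sw x' z (sw x x' c)) P0) with (mapv (sw x z) P0). apply al_refl.
    apply mapv_ext. intros c Hc. assert (c <> z) by (intro; subst; tauto). assert (c <> x') by (intro; subst; tauto).
    destruct (Nat.eq_dec c x); subst; sws; auto.
  - inversion E; subst. exists p, P; split; auto.
    right; exists x', x; split; [eapply pbv_set; eauto|]; split; [rewrite set_pbv_set, set_pbv_id; auto|].
    intros z Hz1 Hz2.
    rewrite ren_v_sw in * by auto. rewrite mapv_comp.
    replace (mapv (fun c => sw x' z (sw x x' c)) P) with (mapv (sw x z) P). apply al_refl.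
    apply mapv_ext. intros c Hc. assert (c <> x') by (intro; subst; tauto).
    assert (c <> z) by (intro; subst; tauto).
    destruct (Nat.eq_dec c x); subst; sws; auto.
Qed.

Lemma alpha_pre p P Y : alpha (Pre p P) Y -> exists p' P', Y = Pre p' P' /\
  ((pbv p = None /\ p' = p /\ alpha P P') \/
   (exists x x', pbv p = Some x /\ p' = set_pbv p x' /\
      forall w, ~ occurs_v w P -> ~ occurs_v w P' -> alpha (mapv (sw x w) P) (mapv (sw x' w) P'))).
Proof. intros H. apply (proj1 (alpha_pre_gen _ _ H)); auto. Qed.

Definition PeelRel X Y := forall a b q R, X = Pre (PMatch a b q) R -> exists q' R',
  Y = Pre (PMatch a b q') R' /\ alpha (Pre q R) (Pre q' R').
Lemma alpha_peel_gen X Y : alpha X Y -> PeelRel X Y /\ PeelRel Y X.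
Proof. intros H; induction H; unfold PeelRel in *; split; intros a0 b0 q0 R0 E; try discriminate.
  - subst; exists q0, R0; split; auto; apply al_refl.
  - subst; exists q0, R0; split; auto; apply al_refl.
  - destruct IHalpha as [_ H2]; eauto.
  - destruct IHalpha as [H2 _]; eauto.
  - destruct IHalpha1 as [A1 B1]; destruct IHalpha2 as [A2 B2].
    destruct (A1 _ _ _ _ E) as [q1 [R1 [E1 H3]]]. destruct (A2 _ _ _ _ E1) as [q2 [R2 [E2 H5]]].
    exists q2, R2; split; auto; eapply al_trans; eauto.
  - destruct IHalpha1 as [A1 B1]; destruct IHalpha2 as [A2 B2].
    destruct (B2 _ _ _ _ E) as [q1 [R1 [E1 H3]]]. destruct (B1 _ _ _ _ E1) as [q2 [R2 [E2 H5]]].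
    exists q2, R2; split; auto; eapply al_trans; eauto.
  - inversion E; subst. exists q0, Q; split; auto; apply al_pre; auto.
  - inversion E; subst. exists q0, P; split; auto; apply al_pre, al_sym; auto.
  - inversion E; subst. simpl. exists (set_pbv q0 x'), (ren_v x x' R0); split; auto.
    apply al_in_ren; auto.
  - destruct p; simpl in E; inversion E; subst. exists p, P; split; auto.
    apply al_sym, al_in_ren; auto.
Qed.
Lemma alpha_peel a b q R Y : alpha (Pre (PMatch a b q) R) Y -> exists q' R',
  Y = Pre (PMatch a b q') R' /\ alpha (Pre q R) (Pre q' R').
Proof. intros H. apply (proj1 (alpha_peel_gen _ _ H)); auto. Qed.

Lemma mapc_pref_id f p : (forall c, pchan c p -> f c = c) -> mapc_pref f p = p.
Proof. intros H. transitivity (mapc_pref (fun c => c) p). apply mapc_pref_ext; auto.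
  clear H; induction p; simpl; try destruct n; try destruct n0; simpl; congruence. Qed.

Lemma fresh_c (Ps : list proc) (cs : list chan) : exists z, (forall P, In P Ps -> ~ occurs_c z P) /\ ~ In z cs.
Proof. destruct (fresh_nat (cs ++ flat_map chans Ps)) as [z Hz]. exists z. rewrite in_app_iff in Hz. split.
  - intros P HP Hc. apply Hz. right. apply in_flat_map. exists P; split; auto. apply occ_chans; auto.
  - tauto.
Qed.
Lemma fresh_v (Ps : list proc) (cs : list var) : exists z, (forall P, In P Ps -> ~ occurs_v z P) /\ ~ In z cs.
Proof. destruct (fresh_nat (cs ++ flat_map vars Ps)) as [z Hz]. exists z. rewrite in_app_iff in Hz. split.
  - intros P HP Hc. apply Hz. right. apply in_flat_map. exists P; split; auto. apply occ_vars; auto.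
  - tauto.
Qed.

Lemma sw_same a c : sw a a c = c.
Proof. unfold sw. destruct (Nat.eqb_spec c a); subst; auto. Qed.

Lemma alpha_swap_nonfree_n n : forall P a b, size P <= n -> ~ free_chan a P -> ~ free_chan b P ->
  alpha P (mapc (sw a b) P).
Proof. induction n; intros P a b Hs Ha Hb; [pose proof (size_pos P); lia|].
  destruct P; simpl in *.
  - apply al_refl.
  - rewrite mapc_pref_id. apply al_pre, IHn; auto; lia.
    intros c Hc. apply sw_o; intro; subst; tauto.
  - apply al_par; apply IHn; auto; lia.
  - destruct (Nat.eq_dec c a); [|destruct (Nat.eq_dec c b)].
    + subst. rewrite sw_l.
      destruct (Nat.eq_dec a b). { subst. rewrite mapc_id. apply al_refl. intros; apply sw_same. }
      assert (Hb': ~ free_chan b P) by (intro; apply Hb; split; auto).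
      destruct (fresh_c [P] [a; b]) as [z [Hz1 Hz2]]. assert (Hz: ~ occurs_c z P) by (apply Hz1; simpl; auto).
      simpl in Hz2.
      eapply al_trans. apply (alpha_res_sw a z); auto.
      eapply al_trans; [|apply al_sym, (alpha_res_sw b z)].
      2:{ rewrite occ_sw. sws; auto. }
      apply al_res. rewrite mapc_comp.
      replace (mapc (fun c => sw b z (sw a b c)) P) with (mapc (sw a b) (mapc (sw a z) P)).
      * apply IHn. rewrite size_mapc; lia. rewrite free_sw; sws; intro Hc; apply Hz, free_occ; auto.
        rewrite free_sw; sws; auto.
      * rewrite mapc_comp. apply mapc_ext. intros c Hc. assert (c <> z) by (intro; subst; tauto).
        destruct (Nat.eq_dec c a); [subst; sws; auto|]. destruct (Nat.eq_dec c b); subst; sws; auto.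
    + subst. rewrite sw_r.
      destruct (Nat.eq_dec a b). { subst. rewrite mapc_id. apply al_refl. intros; apply sw_same. }
      assert (Ha': ~ free_chan a P) by (intro; apply Ha; split; auto).
      destruct (fresh_c [P] [a; b]) as [z [Hz1 Hz2]]. assert (Hz: ~ occurs_c z P) by (apply Hz1; simpl; auto).
      simpl in Hz2.
      eapply al_trans. apply (alpha_res_sw b z); auto.
      eapply al_trans; [|apply al_sym, (alpha_res_sw a z)].
      2:{ rewrite occ_sw. sws; auto. }
      apply al_res. rewrite mapc_comp.
      replace (mapc (fun c => sw a z (sw a b c)) P) with (mapc (sw a b) (mapc (sw b z) P)).
      * apply IHn. rewrite size_mapc; lia. rewrite free_sw; sws; auto.
        rewrite free_sw; sws; intro Hc; apply Hz, free_occ; auto.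
      * rewrite mapc_comp. apply mapc_ext. intros c Hc. assert (c <> z) by (intro; subst; tauto).
        destruct (Nat.eq_dec c a); [subst; sws; auto|]. destruct (Nat.eq_dec c b); subst; sws; auto.
    + rewrite sw_o by auto. apply al_res, IHn; try lia.
      intro; apply Ha; split; auto. intro; apply Hb; split; auto.
  - apply al_rep, IHn; auto; lia.
Qed.
Lemma alpha_swap_nonfree P a b : ~ free_chan a P -> ~ free_chan b P -> alpha P (mapc (sw a b) P).
Proof. intros; eapply alpha_swap_nonfree_n; eauto. Qed.


Lemma sp_sw_name x u c a : a <> NV u ->
  subst_name u c (mapv_name (sw x u) a) = subst_name x c a.
Proof. destruct a as [z|]; simpl; intros H; auto.
  assert (z <> u) by congruence.
  destruct (Nat.eq_dec z x).
  - subst. rewrite sw_l, !Nat.eqb_refl; auto.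
  - rewrite sw_o by auto. destruct (Nat.eqb_spec z u); destruct (Nat.eqb_spec z x); try lia; auto.
Qed.
Lemma sp_sw_none x u c p : pbv p = None -> ~ pvar u p ->
  subst_pref u c (mapv_pref (sw x u) p) = subst_pref x c p.
Proof. induction p; simpl; intros H1 H2; try discriminate.
  - rewrite sp_sw_name; auto.
  - rewrite !sp_sw_name, IHp; auto.
Qed.
Lemma sp_sw_some x u c p y : pbv p = Some y -> ~ pvar u p ->
  subst_pref u c (mapv_pref (sw x u) p) = set_pbv (subst_pref x c p) (sw x u y).
Proof. induction p; simpl; intros H1 H2; try discriminate.
  - inversion H1; subst. rewrite sp_sw_name; auto.
  - rewrite !sp_sw_name, IHp; auto.
Qed.

Lemma subst_rename_alpha x u c P : ~ occurs_v u P ->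
  alpha (subst P x c) (subst (mapv (sw x u) P) u c).
Proof. induction P; simpl; intros H.
  - apply al_refl.
  - rewrite pbv_mapv. destruct (pbv p) as [y|] eqn:Ep; simpl.
    + rewrite (sp_sw_some x u c p y) by auto.
      destruct (Nat.eq_dec y x).
      * subst. rewrite sw_l, !Nat.eqb_refl. apply alpha_in_sw; auto. rewrite pbv_subst; auto.
      * assert (y <> u) by (intro; subst; apply H; left; clear -Ep; induction p; simpl in *; try discriminate; auto; inversion Ep; auto).
        rewrite sw_o by auto. destruct (Nat.eqb_spec y x); try lia. destruct (Nat.eqb_spec y u); try lia.
        rewrite set_pbv_id by (rewrite pbv_subst; auto). apply al_pre, IHP; auto.
    + rewrite sp_sw_none by auto. apply al_pre, IHP; auto.
  - apply al_par; auto.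
  - apply al_res; auto.
  - apply al_rep; auto.
Qed.

Lemma SA_n n : forall P P' w c, size P <= n -> alpha P P' -> ~ chan_bound c P -> ~ chan_bound c P' ->
  alpha (subst P w c) (subst P' w c).
Proof. induction n; intros P P' w c Hs Ha H1 H2; [pose proof (size_pos P); lia|].
  destruct P as [|p P|Q1 Q2|k P|P]; simpl in Hs.
  - apply alpha_nil_l in Ha; subst; apply al_refl.
  - apply alpha_pre in Ha. destruct Ha as [p' [R' [-> [[N [-> Ha]]|[y [y' [Sy [-> Ha]]]]]]]].
    + simpl. rewrite N. apply al_pre, IHn; auto; lia.
    + simpl in *. rewrite Sy, (pbv_set p y' y) by auto.
      set (T := if Nat.eqb y w then P else subst P w c).
      set (T' := if Nat.eqb y' w then R' else subst R' w c).
      destruct (fresh_v [P; R'; T; T'] [w; y; y']) as [u [Hu1 Hu2]]. simpl in Hu2.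
      assert (~ occurs_v u P) by (apply Hu1; simpl; auto).
      assert (~ occurs_v u R') by (apply Hu1; simpl; auto).
      assert (~ occurs_v u T) by (apply Hu1; simpl; auto).
      assert (~ occurs_v u T') by (apply Hu1; simpl; auto).
      eapply al_trans. apply (alpha_in_sw _ y u); auto. rewrite pbv_subst; auto.
      eapply al_trans; [|apply al_sym, (alpha_in_sw _ y' u)]; auto.
      2:{ rewrite pbv_subst. apply (pbv_set p y' y); auto. }
      rewrite <- set_pbv_subst, !set_pbv_set. apply al_pre.
      specialize (Ha u H H0).
      subst T T'. destruct (Nat.eqb_spec y w); destruct (Nat.eqb_spec y' w); subst.
      * auto.
      * assert (~ fv w R').
        { intro Hf. apply (alpha_fv w) in Ha. rewrite !fv_swv in Ha. rewrite sw_l in Ha.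
          rewrite sw_o in Ha by auto. apply Ha in Hf. apply H, fv_occ; auto. }
        rewrite subst_notfree; auto.
      * assert (~ fv w P).
        { intro Hf. apply (alpha_fv w) in Ha. rewrite !fv_swv in Ha. rewrite sw_l in Ha.
          rewrite sw_o in Ha by auto. apply Ha in Hf. apply H0, fv_occ; auto. }
        rewrite subst_notfree; auto.
      * rewrite !mapv_subst by apply sw_inj. rewrite !(sw_o _ _ w) by auto.
        apply IHn; auto. rewrite size_mapv; lia. rewrite cb_mapv; auto. rewrite cb_mapv; auto.
  - apply alpha_par in Ha. destruct Ha as [Q1' [Q2' [-> [Ha1 Ha2]]]]. simpl in *.
    apply al_par; apply IHn; auto; lia.
  - apply alpha_res in Ha. destruct Ha as [k' [R' [-> Ha]]]. simpl in *.
    assert (k <> c) by tauto. assert (k' <> c) by tauto.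
    destruct (fresh_c [P; R'; subst P w c; subst R' w c] [c]) as [z [Hz1 Hz2]]. simpl in Hz2.
    assert (~ occurs_c z P) by (apply Hz1; simpl; auto).
    assert (~ occurs_c z R') by (apply Hz1; simpl; auto).
    assert (~ occurs_c z (subst P w c)) by (apply Hz1; simpl; auto).
    assert (~ occurs_c z (subst R' w c)) by (apply Hz1; simpl; auto).
    eapply al_trans. apply (alpha_res_sw k z); auto.
    eapply al_trans; [|apply al_sym, (alpha_res_sw k' z)]; auto.
    apply al_res. specialize (Ha z H3 H4).
    rewrite !mapc_subst. rewrite (sw_o k z c), (sw_o k' z c) by auto.
    apply IHn; auto. rewrite size_mapc; lia.
    rewrite cb_sw, sw_o by auto; tauto. rewrite cb_sw, sw_o by auto; tauto.
  - apply alpha_rep in Ha. destruct Ha as [R' [-> Ha]]. simpl in *. apply al_rep, IHn; auto; lia.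
Qed.
Lemma SA P P' w c : alpha P P' -> ~ chan_bound c P -> ~ chan_bound c P' ->
  alpha (subst P w c) (subst P' w c).
Proof. intros; eapply SA_n; eauto. Qed.

Lemma TIN a x P a' x' P' c : alpha (Pre (PIn a x) P) (Pre (PIn a' x') P') ->
  ~ chan_bound c P -> ~ chan_bound c P' -> alpha (subst P x c) (subst P' x' c).
Proof. intros Ha H1 H2. apply alpha_pre in Ha.
  destruct Ha as [p' [R' [E [[N _]|[y [y' [Sy [Ep Ha]]]]]]]]; [discriminate|].
  simpl in *. inversion Sy; subst y. subst p'. simpl in E. inversion E. subst R' y' a'.
  destruct (fresh_v [P; P'] [x; x']) as [u [Hu1 Hu2]]. simpl in Hu2.
  assert (~ occurs_v u P) by (apply Hu1; simpl; auto).
  assert (~ occurs_v u P') by (apply Hu1; simpl; auto).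
  eapply al_trans. apply (subst_rename_alpha x u); auto.
  eapply al_trans; [|apply al_sym, (subst_rename_alpha x' u)]; auto.
  apply SA; auto; rewrite cb_mapv; auto.
Qed.


Lemma act_names_mapa f a k : inj f -> (act_names (mapa f a) (f k) <-> act_names a k).
Proof. intros Hf. destruct a; simpl; try tauto;
  split; intros [H|H]; try (apply Hf in H); subst; auto. Qed.
Lemma act_bn_mapa f a c : act_bn (mapa f a) c -> exists d, act_bn a d /\ c = f d.
Proof. destruct a; simpl; try tauto. intros ->; eauto. Qed.

Lemma trans_mapc f P a Q : inj f -> trans P a Q -> trans (mapc f P) (mapa f a) (mapc f Q).
Proof. intros Hf H. induction H; simpl.
  - apply t_out.
  - rewrite mapc_subst. apply t_in. rewrite cb_mapc; auto.
  - apply t_match. auto.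
  - apply t_res; auto. rewrite act_names_mapa; auto.
  - apply t_open; auto; intro E; apply Hf in E; auto.
  - apply t_parl; auto. intros c Hc. apply act_bn_mapa in Hc. destruct Hc as [d [Hd ->]].
    rewrite free_mapc; auto.
  - apply t_parr; auto. intros c Hc. apply act_bn_mapa in Hc. destruct Hc as [d [Hd ->]].
    rewrite free_mapc; auto.
  - eapply t_comml; eauto.
  - eapply t_commr; eauto.
  - eapply t_closel; eauto. rewrite free_mapc; auto.
  - eapply t_closer; eauto. rewrite free_mapc; auto.
  - apply t_rep_act; auto.
  - eapply t_rep_comm; eauto.
  - eapply t_rep_close; eauto. rewrite free_mapc; auto.
  - eapply t_alpha; [apply alpha_mapc; eauto|]; auto.
Qed.

Lemma trans_sw a b P al Q : trans P al Q -> trans (mapc (sw a b) P) (mapa (sw a b) al) (mapc (sw a b) Q).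
Proof. apply trans_mapc, sw_inj. Qed.

Ltac foauto := repeat match goal with
  | H: _ /\ _ |- _ => destruct H
  | H: _ \/ _ |- _ => destruct H
  | IH: forall c, fo c ?Q -> _, H: fo ?c ?Q |- _ => apply IH in H
  end; simpl in *; try tauto; try (left; split; [congruence|tauto]).

Lemma FO P a P' : trans P a P' -> forall c, fo c P' -> fo c P \/ act_bn a c.
Proof. intros H; induction H; intros c0 Hc; simpl in *.
  - auto.
  - rewrite fo_subst in Hc; auto.
  - apply IHtrans in Hc. simpl in Hc. tauto.
  - destruct Hc as [H1 H2]. apply IHtrans in H2. destruct H2; auto.
  - apply IHtrans in Hc. simpl in Hc. destruct (Nat.eq_dec c0 l); auto. left; split; [intro; subst; auto|tauto].
  - foauto.
  - foauto.
  - foauto.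
  - foauto.
  - foauto; congruence.
  - foauto; congruence.
  - foauto.
  - foauto.
  - foauto; congruence.
  - apply IHtrans in Hc. rewrite (alpha_fo _ _ _ H); auto.
Qed.

Lemma FOout P a P' : trans P a P' -> forall k c, a = AOut k c -> fo c P.
Proof. intros H; induction H; intros k0 c0 E; try discriminate; simpl in *.
  - inversion E; subst; auto.
  - apply IHtrans in E; simpl in E; tauto.
  - subst. split; [intro; subst; simpl in H0; tauto|]. eauto.
  - left; eauto.
  - right; eauto.
  - eauto.
  - apply (alpha_fo _ _ _ H); eauto.
Qed.

Lemma alpha_pre_r X p P : alpha X (Pre p P) -> exists p' P', X = Pre p' P'.
Proof. intros H. apply al_sym, alpha_pre in H. destruct H as [p' [P' [E _]]]; eauto. Qed.
Lemma alpha_res_r X k P : alpha X (Res k P) -> exists k' P', X = Res k' P'.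
Proof. intros H. apply al_sym, alpha_res in H. destruct H as [k' [P' [E _]]]; eauto. Qed.

Lemma pre_no_bout X a X' : trans X a X' -> forall p P, alpha X (Pre p P) -> forall k d, a <> ABOut k d.
Proof. intros H; induction H; intros p0 P0 Ha k0 d0; try discriminate;
  try (apply alpha_pre_r in Ha; destruct Ha as [? [? Ha]]; discriminate).
  - eapply IHtrans. apply al_refl.
  - eapply IHtrans. eapply al_trans; [apply al_sym|]; eauto.
Qed.

Lemma BNfree P a P' : trans P a P' -> forall k d, a = ABOut k d -> k <> d /\ ~ free_chan d P.
Proof. intros H; induction H; intros k0 d0 E; try discriminate; simpl in *.
  - exfalso. eapply pre_no_bout; eauto. apply al_refl.
  - subst. destruct (IHtrans _ _ eq_refl) as [A B]. split; auto. intros [C D]; auto.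
  - inversion E; subst. split; auto. tauto.
  - subst. destruct (IHtrans _ _ eq_refl) as [A B]. split; auto. specialize (H0 d0). simpl in H0. tauto.
  - subst. destruct (IHtrans _ _ eq_refl) as [A B]. split; auto. specialize (H0 d0). simpl in H0. tauto.
  - subst. destruct (IHtrans _ _ eq_refl) as [A B]. split; auto.
  - subst. destruct (IHtrans _ _ eq_refl) as [A B]. split; auto. rewrite (alpha_free _ _ _ H); auto.
Qed.

Lemma out_inv X a X' : trans X a X' -> forall k c W, alpha X (Pre (POut (NC k) c) W) ->
  a = AOut k c /\ alpha X' W.
Proof. intros H; induction H; intros k0 c0 W Ha;
  try (apply al_sym, alpha_pre in Ha; destruct Ha as [? [? [Ha _]]]; discriminate).
  - apply alpha_pre in Ha. destruct Ha as [p' [P' [E [[_ [-> Ha]]|[y1 [y2 [S _]]]]]]]; [|discriminate].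
    inversion E; subst; auto.
  - apply alpha_pre in Ha. destruct Ha as [p' [P' [E [[N _]|[y1 [y2 [S [-> _]]]]]]]]; [discriminate|].
    simpl in E; discriminate.
  - apply alpha_peel in Ha. destruct Ha as [? [? [E _]]]; discriminate.
  - eapply IHtrans. eapply al_trans; [apply al_sym|]; eauto.
Qed.

Lemma inp_inv X a X' : trans X a X' -> forall k x W, alpha X (Pre (PIn (NC k) x) W) ->
  exists c, a = AIn k c.
Proof. intros H; induction H; intros k0 x0 W Ha;
  try (apply al_sym, alpha_pre in Ha; destruct Ha as [? [? [Ha _]]]; discriminate).
  - apply alpha_pre in Ha. destruct Ha as [p' [P' [E [[N [Ep _]]|[y1 [y2 [S _]]]]]]]; subst; discriminate.
  - apply alpha_pre in Ha. destruct Ha as [p' [P' [E [[N _]|[y1 [y2 [S [-> _]]]]]]]]; [discriminate|].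
    simpl in E; inversion E; subst; eauto.
  - apply alpha_peel in Ha. destruct Ha as [? [? [E _]]]; discriminate.
  - eapply IHtrans. eapply al_trans; [apply al_sym|]; eauto.
Qed.

Lemma res_out_form k P l W : alpha (Res k P) (Res l (Pre (POut (NC l) l) W)) ->
  exists W', alpha P (Pre (POut (NC k) k) W').
Proof. intros Ha. apply alpha_res in Ha. destruct Ha as [k' [P' [E Ha]]]. inversion E; subst.
  destruct (fresh_c [P; Pre (POut (NC k') k') W] []) as [z [Hz _]].
  specialize (Ha z (Hz _ (or_introl eq_refl)) (Hz _ (or_intror (or_introl eq_refl)))).
  simpl in Ha. rewrite sw_l in Ha. apply (alpha_sw k z) in Ha. rewrite sw_mapc_inv in Ha.
  simpl in Ha. rewrite sw_r in Ha. eauto.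
Qed.

Lemma OutSelfDead X a X' : trans X a X' -> forall l W, alpha X (Res l (Pre (POut (NC l) l) W)) -> False.
Proof. intros H; induction H; intros l0 W Ha;
  try (apply al_sym, alpha_res in Ha; destruct Ha as [? [? [Ha _]]]; discriminate).
  - apply res_out_form in Ha. destruct Ha as [W' Ha].
    destruct (out_inv _ _ _ H _ _ _ Ha) as [-> _]. simpl in H0; tauto.
  - apply res_out_form in Ha. destruct Ha as [W' Ha].
    destruct (out_inv _ _ _ H _ _ _ Ha) as [E _]. inversion E; subst; tauto.
  - eapply IHtrans. eapply al_trans; [apply al_sym|]; eauto.
Qed.


Definition odflt (l : chan) (o : option chan) : chan := match o with Some c => c | None => l end.
Definition N2 (l m : chan) (y : var) (q : prefix) : proc :=
  Pre (PIn (NC m) y) (Pre (PMatch (NV y) (NC l) q) Nil).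
Definition N2B (m : chan) (y : var) : proc := Pre (PIn (NC m) y) Nil.
Definition N3 (l : chan) (kk mm : option chan) (y : var) (q : prefix) : proc :=
  Res l (Pre (POut (NC (odflt l kk)) l) (N2 l (odflt l mm) y q)).
Definition N3B (l : chan) (kk mm : option chan) (y : var) : proc :=
  Res l (Pre (POut (NC (odflt l kk)) l) (N2B (odflt l mm) y)).

Lemma ResOut_trans X a X' : trans X a X' -> forall l k Z, alpha X (Res l (Pre (POut (NC k) l) Z)) -> k <> l ->
  exists d z, a = ABOut k d /\ k <> d /\ ~ occurs_c z Z /\ z <> l /\ z <> d /\ z <> k /\
    (forall c, free_chan c (Res l (Pre (POut (NC k) l) Z)) -> c <> d) /\
    alpha X' (mapc (sw d z) (mapc (sw l z) Z)).
Proof. intros H; induction H; intros l0 k0 Z Ha Hk;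
  try (apply al_sym, alpha_res in Ha; destruct Ha as [? [? [Ha _]]]; discriminate).
  -
    apply alpha_res in Ha. destruct Ha as [k9 [P9 [E Ha]]]. injection E as E1 E2. subst k9 P9.
    destruct (fresh_c [P; Pre (POut (NC k0) l0) Z] [k; k0; l0]) as [z [Hz Hz']]. simpl in Hz'.
    specialize (Ha z (Hz _ (or_introl eq_refl)) (Hz _ (or_intror (or_introl eq_refl)))).
    simpl in Ha. rewrite sw_l, (sw_o l0 z k0) in Ha by (auto; intuition).
    apply (alpha_sw k z) in Ha. rewrite sw_mapc_inv in Ha. simpl in Ha. rewrite sw_r in Ha.
    destruct (out_inv _ _ _ H _ _ _ Ha) as [-> _]. simpl in H0; tauto.
  -
    assert (Hf: free_chan k0 (Res l0 (Pre (POut (NC k0) l0) Z))) by (simpl; auto).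
    rewrite <- (alpha_free _ _ _ Ha) in Hf. simpl in Hf. destruct Hf as [Hkl _].
    pose proof Ha as Ha0.
    apply alpha_res in Ha. destruct Ha as [k9 [P9 [E Ha]]]. injection E as E1 E2. subst k9 P9.
    destruct (fresh_c [P; Pre (POut (NC k0) l0) Z] [l; k0; l0]) as [z [Hz Hz']]. simpl in Hz'.
    assert (Hz1: ~ occurs_c z Z) by (intro; apply (Hz _ (or_intror (or_introl eq_refl))); simpl; auto).
    specialize (Ha z (Hz _ (or_introl eq_refl)) (Hz _ (or_intror (or_introl eq_refl)))).
    simpl in Ha. rewrite sw_l, (sw_o l0 z k0) in Ha by (auto; intuition).
    apply (alpha_sw l z) in Ha. rewrite sw_mapc_inv in Ha. simpl in Ha. rewrite sw_r in Ha.
    rewrite (sw_o l z k0) in Ha by (auto; intuition).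
    destruct (out_inv _ _ _ H _ _ _ Ha) as [E Ha2]. inversion E; subst.
    exists l, z; repeat split; auto; try (intro; subst; tauto).
    intros c Hc Hc'. subst c. rewrite <- (alpha_free _ _ _ Ha0) in Hc. simpl in Hc; tauto.
  - eapply IHtrans; eauto. eapply al_trans; [apply al_sym|]; eauto.
Qed.

Lemma mapc_N2 f l m y q : mapc f (N2 l m y q) = N2 (f l) (f m) y (mapc_pref f q).
Proof. reflexivity. Qed.
Lemma mapc_N2B f m y : mapc f (N2B m y) = N2B (f m) y.
Proof. reflexivity. Qed.

Lemma N3_trans X a X' : trans X a X' -> forall l k mm y q, alpha X (N3 l (Some k) mm y q) -> k <> l -> mm <> Some l ->
  exists d, a = ABOut k d /\ k <> d /\ mm <> Some d /\ exists q', alpha X' (N2 d (odflt d mm) y q').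
Proof. intros H l k mm y q Ha Hk Hm. unfold N3 in Ha. simpl in Ha.
  destruct (ResOut_trans _ _ _ H _ _ _ Ha Hk) as [d [z [E [Hkd [Hz [Hzl [Hzd [Hzk [Hfr Ha']]]]]]]]].
  exists d. rewrite !mapc_N2 in Ha'. rewrite sw_l, sw_r in Ha'.
  destruct mm as [m|]; simpl in *.
  - assert (m <> l) by congruence.
    assert (m <> z) by (intro; subst; apply Hz; simpl; auto).
    assert (m <> d) by (apply Hfr; simpl; split; auto).
    rewrite (sw_o l z m), (sw_o d z m) in Ha' by auto.
    repeat split; auto. congruence. eauto.
  - rewrite sw_l, sw_r in Ha'. repeat split; auto. discriminate. eauto.
Qed.

Lemma N3B_trans X a X' : trans X a X' -> forall l k mm y, alpha X (N3B l (Some k) mm y) -> k <> l -> mm <> Some l ->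
  exists d, a = ABOut k d /\ k <> d /\ mm <> Some d /\ alpha X' (N2B (odflt d mm) y).
Proof. intros H l k mm y Ha Hk Hm. unfold N3B in Ha. simpl in Ha.
  destruct (ResOut_trans _ _ _ H _ _ _ Ha Hk) as [d [z [E [Hkd [Hz [Hzl [Hzd [Hzk [Hfr Ha']]]]]]]]].
  exists d. rewrite !mapc_N2B in Ha'.
  destruct mm as [m|]; simpl in *.
  - assert (m <> l) by congruence.
    assert (m <> z) by (intro; subst; apply Hz; simpl; auto).
    assert (m <> d) by (apply Hfr; simpl; split; auto).
    rewrite (sw_o l z m), (sw_o d z m) in Ha' by auto.
    repeat split; auto. congruence.
  - rewrite sw_l, sw_r in Ha'. repeat split; auto. discriminate.
Qed.

Lemma N3_rename l kk mm y q z : kk <> Some l -> mm <> Some l -> kk <> Some z -> mm <> Some z ->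
  ~ occurs_c z (Pre (POut (NC (odflt l kk)) l) (N2 l (odflt l mm) y q)) ->
  alpha (N3 l kk mm y q) (N3 z kk mm y (mapc_pref (sw l z) q)).
Proof. intros H1 H2 H3 H4 H5. unfold N3. eapply al_trans. apply alpha_res_sw; eauto.
  simpl. rewrite sw_l.
  assert (E: forall o, o <> Some l -> o <> Some z -> sw l z (odflt l o) = odflt z o).
  { intros [c|] A B; simpl; [apply sw_o; congruence|apply sw_l]. }
  rewrite !E by auto. apply al_refl.
Qed.
Lemma N3B_rename l kk mm y z : kk <> Some l -> mm <> Some l -> kk <> Some z -> mm <> Some z ->
  ~ occurs_c z (Pre (POut (NC (odflt l kk)) l) (N2B (odflt l mm) y)) ->
  alpha (N3B l kk mm y) (N3B z kk mm y).
Proof. intros H1 H2 H3 H4 H5. unfold N3B. eapply al_trans. apply alpha_res_sw; eauto.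
  simpl. rewrite sw_l.
  assert (E: forall o, o <> Some l -> o <> Some z -> sw l z (odflt l o) = odflt z o).
  { intros [c|] A B; simpl; [apply sw_o; congruence|apply sw_l]. }
  rewrite !E by auto. apply al_refl.
Qed.

Lemma N3_open l k mm y q : k <> l -> trans (N3 l (Some k) mm y q) (ABOut k l) (N2 l (odflt l mm) y q).
Proof. intros. unfold N3. apply t_open; auto. simpl. apply t_out. Qed.
Lemma N3B_open l k mm y : k <> l -> trans (N3B l (Some k) mm y) (ABOut k l) (N2B (odflt l mm) y).
Proof. intros. unfold N3B. apply t_open; auto. simpl. apply t_out. Qed.


Definition rem (k : chan) (L : list chan) : list chan := remove Nat.eq_dec k L.
Lemma in_rem c k L : In c (rem k L) <-> In c L /\ c <> k.
Proof. unfold rem. split; intro H. apply in_remove in H; auto. apply in_in_remove; tauto. Qed.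

Definition InForm (k : chan) (A : proc) := exists x P, A = Pre (PIn (NC k) x) P.

Inductive E : list chan -> option chan -> proc -> proc -> Prop :=
| E_nil L : E L None Nil Nil
| E_pre L p A B : E L None A B -> E L None (Pre p A) (Pre p B)
| E_par L A1 A2 B1 B2 : E L None A1 B1 -> E L None A2 B2 -> E L None (Par A1 A2) (Par B1 B2)
| E_rep L A B : E L None A B -> E L None (Rep A) (Rep B)
| E_res L k A B : E (rem k L) None A B -> E L None (Res k A) (Res k B)
| E_prot L k A B : E (k :: rem k L) None A B -> ~ fo k B -> E L None (Res k A) (Res k B)
| E_n1 L c d q : c <> d -> E L None (Pre (PMatch (NC c) (NC d) q) Nil) Nil
| E_n2 L m y l q y2 : In l L -> E L None (N2 l m y q) (N2B m y2)
| E_dead L l mm y q : mm <> Some l -> E L None (N3 l None mm y q) (N3B l None mm y)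
| E_ires L k A B : E [] (Some k) A B -> E L None (Res k A) (Res k B)
| E_ipar k l mm y q A2 B2 : mm <> Some l -> k <> l -> E [] None A2 B2 -> InForm k A2 ->
    E [] (Some k) (Par (N3 l (Some k) mm y q) A2) (Par (N3B l (Some k) mm y) B2).

Lemma E_free L pk A B c : E L pk A B -> free_chan c B -> free_chan c A.
Proof. intros H; induction H; unfold N3, N3B, N2, N2B in *; simpl in *; intros Hc; tauto. Qed.

Lemma E_index_gen L pk A B : E L pk A B -> pk = None -> forall L', (forall c, In c L -> free_chan c A -> In c L') ->
  E L' None A B.
Proof. intros H; induction H; intros Hpk L' HL; try discriminate.
  - constructor.
  - constructor; apply IHE; auto. intros c H1 H2; apply HL; simpl; auto.
  - constructor; [apply IHE1|apply IHE2]; auto; intros c H1 H2; apply HL; simpl; auto.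
  - constructor; apply IHE; auto.
  - constructor; apply IHE; auto. intros c H1 H2. rewrite in_rem in *. destruct H1 as [H1 H3].
    split; auto; apply HL; simpl; auto.
  - apply E_prot; auto. apply IHE; auto. intros c H1 H2. simpl in *. destruct H1 as [H1|H1]; [left; auto|].
    right. rewrite in_rem in *. destruct H1 as [H1 H3]. split; auto; apply HL; simpl; auto.
  - apply E_n1; auto.
  - apply E_n2. apply HL; auto. unfold N2; simpl; auto.
  - apply E_dead; auto.
  - apply E_ires; auto.
Qed.
Lemma E_index L A B L' : E L None A B -> (forall c, In c L -> free_chan c A -> In c L') -> E L' None A B.
Proof. intros; eapply E_index_gen; eauto. Qed.

Lemma odflt_map f l o : f (odflt l o) = odflt (f l) (option_map f o).
Proof. destruct o; auto. Qed.
Lemma mapc_N3 f l kk mm y q : mapc f (N3 l kk mm y q) = N3 (f l) (option_map f kk) (option_map f mm) y (mapc_pref f q).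
Proof. unfold N3. simpl. rewrite !odflt_map. reflexivity. Qed.
Lemma mapc_N3B f l kk mm y : mapc f (N3B l kk mm y) = N3B (f l) (option_map f kk) (option_map f mm) y.
Proof. unfold N3B. simpl. rewrite !odflt_map. reflexivity. Qed.
Lemma option_map_neq f o l : inj f -> o <> Some l -> option_map f o <> Some (f l).
Proof. intros Hf H. destruct o; simpl; try discriminate. intro E. inversion E. apply Hf in H1. subst; auto. Qed.

Lemma E_mapc f L pk A B : inj f -> E L pk A B -> E (map f L) (option_map f pk) (mapc f A) (mapc f B).
Proof. intros Hf H; induction H.
  - simpl; constructor.
  - simpl; constructor; auto.
  - simpl; constructor; auto.
  - simpl; constructor; auto.
  - simpl; constructor. eapply E_index; eauto. intros c H1 _. apply in_map_iff in H1.
    destruct H1 as [c0 [<- H1]]. rewrite in_rem in *. destruct H1. split. apply in_map; auto.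
    intro E'; apply Hf in E'; auto.
  - simpl; apply E_prot. eapply E_index; eauto. intros c H1 _. simpl in H1. destruct H1 as [H1|H1]; [left; auto|].
    apply in_map_iff in H1. destruct H1 as [c0 [<- H1]]. rewrite in_rem in *. destruct H1. right.
    rewrite in_rem. split. apply in_map; auto. intro E'; apply Hf in E'; auto.
    rewrite fo_mapc; auto.
  - simpl; apply E_n1. intro E'; apply Hf in E'; auto.
  - rewrite mapc_N2, mapc_N2B. apply E_n2. apply in_map; auto.
  - rewrite mapc_N3, mapc_N3B. apply E_dead. apply option_map_neq; auto.
  - simpl; apply E_ires. auto.
  - cbn [mapc]. rewrite mapc_N3, mapc_N3B. simpl. apply E_ipar; auto;
    try (apply option_map_neq; auto); try (intro E'; apply Hf in E'; auto);
    try (destruct H2 as [x [P ->]]; simpl; exists x, (mapc f P); auto).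
Qed.

Lemma subst_N2 l m y q x c : subst (N2 l m y q) x c = N2 l m y (if Nat.eqb y x then q else subst_pref x c q).
Proof. unfold N2. simpl. destruct (Nat.eqb_spec y x); auto. simpl.
  destruct (Nat.eqb_spec y x); try lia. f_equal. f_equal. destruct (pbv q); [destruct (Nat.eqb _ _)|]; auto. Qed.
Lemma subst_N2B m y x c : subst (N2B m y) x c = N2B m y.
Proof. unfold N2B. simpl. destruct (Nat.eqb y x); auto. Qed.
Lemma subst_N3 l kk mm y q x c : exists q', subst (N3 l kk mm y q) x c = N3 l kk mm y q'.
Proof. unfold N3. cbn [subst subst_pref subst_name pbv]. rewrite subst_N2. eauto. Qed.
Lemma subst_N3B l kk mm y x c : subst (N3B l kk mm y) x c = N3B l kk mm y.
Proof. unfold N3B. cbn [subst subst_pref subst_name pbv]. rewrite subst_N2B. auto. Qed.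

Lemma E_subst L pk A B x c : E L pk A B -> ~ In c L -> ~ chan_bound c A -> E L pk (subst A x c) (subst B x c).
Proof. intros H; induction H; intros HL Hcb.
  - simpl; constructor.
  - simpl in *; constructor. destruct (pbv p) as [v|]; [destruct (Nat.eqb v x)|]; auto.
  - simpl in *; constructor; auto.
  - simpl in *; constructor; auto.
  - simpl in *; constructor. apply IHE; auto. rewrite in_rem; tauto.
  - simpl in *; apply E_prot. apply IHE; auto. simpl; rewrite in_rem; intuition.
    rewrite fo_subst; auto.
  - simpl in *. replace (match pbv q with Some y => if Nat.eqb y x then Nil else Nil | None => Nil end) with Nil
      by (destruct (pbv q); [destruct (Nat.eqb _ _)|]; auto).
    apply E_n1; auto.
  - rewrite subst_N2, subst_N2B. apply E_n2; auto.
  - destruct (subst_N3 l None mm y q x c) as [q' ->]. rewrite subst_N3B. apply E_dead; auto.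
  - simpl in *. apply E_ires. apply IHE; auto.
  - cbn [subst]. destruct (subst_N3 l (Some k) mm y q x c) as [q' ->]. rewrite subst_N3B. apply E_ipar; auto.
    + apply IHE; auto. simpl in Hcb; tauto.
    + destruct H2 as [x0 [P ->]]. simpl. eexists; eexists; eauto.
Qed.

Lemma E_refl L P : E L None P P.
Proof. revert L; induction P; intros L; constructor; auto. Qed.

Lemma E_inform L A B k : E L None A B -> InForm k A -> InForm k B.
Proof. intros H [x [P ->]]. inversion H; subst.
  - exists x, B0; auto.
  - unfold N2B. exists y2, Nil; auto.
Qed.

Lemma InForm_alpha k A A' : InForm k A -> alpha A A' -> InForm k A'.
Proof. intros [x [P ->]] Ha. apply alpha_pre in Ha.
  destruct Ha as [p' [P' [-> [[N _]|[y [y' [S [-> _]]]]]]]]; [discriminate|]. simpl. exists y', P'; auto. Qed.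

Lemma E_res_rename L k A B z : E (rem k L) None A B -> ~ In z L ->
  E (rem z L) None (mapc (sw k z) A) (mapc (sw k z) B).
Proof. intros H Hz. apply (E_mapc (sw k z)) in H; [|apply sw_inj]. simpl in H.
  eapply E_index; eauto. intros c H1 _. apply in_map_iff in H1. destruct H1 as [c0 [<- H1]].
  rewrite in_rem in *. destruct H1. assert (c0 <> z) by (intro; subst; auto).
  rewrite sw_o by auto. auto. Qed.
Lemma E_prot_rename L k A B z : E (k :: rem k L) None A B -> ~ In z L ->
  E (z :: rem z L) None (mapc (sw k z) A) (mapc (sw k z) B).
Proof. intros H Hz. apply (E_mapc (sw k z)) in H; [|apply sw_inj]. simpl in H. rewrite sw_l in H.
  eapply E_index; eauto. intros c H1 _. simpl in H1. destruct H1 as [H1|H1]; [left; auto|right].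
  apply in_map_iff in H1. destruct H1 as [c0 [<- H1]].
  rewrite in_rem in *. destruct H1. assert (c0 <> z) by (intro; subst; auto).
  rewrite sw_o by auto. auto. Qed.

Lemma cb_N3 c l kk mm y q : chan_bound c (N3 l kk mm y q) <-> l = c.
Proof. unfold N3, N2; simpl; tauto. Qed.
Lemma cb_N3B c l kk mm y : chan_bound c (N3B l kk mm y) <-> l = c.
Proof. unfold N3B, N2B; simpl; tauto. Qed.

Lemma E_RA L pk A B c : E L pk A B -> exists A2 B2, alpha A A2 /\ alpha B B2 /\ E L pk A2 B2 /\
  ~ chan_bound c A2 /\ ~ chan_bound c B2.
Proof. intros H; induction H.
  - exists Nil, Nil; repeat split; try apply al_refl; try apply E_nil; simpl; auto.
  - destruct IHE as [A2 [B2 [H1 [H2 [H3 [H4 H5]]]]]].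
    exists (Pre p A2), (Pre p B2); repeat split; try apply al_pre; try apply E_pre; simpl; auto.
  - destruct IHE1 as [C1 [D1 [H1 [H2 [H3 [H4 H5]]]]]]. destruct IHE2 as [C2 [D2 [H6 [H7 [H8 [H9 H10]]]]]].
    exists (Par C1 C2), (Par D1 D2); repeat split; try apply al_par; try apply E_par; simpl; auto; tauto.
  - destruct IHE as [A2 [B2 [H1 [H2 [H3 [H4 H5]]]]]].
    exists (Rep A2), (Rep B2); repeat split; try apply al_rep; try apply E_rep; simpl; auto.
  - destruct IHE as [A2 [B2 [H1 [H2 [H3 [H4 H5]]]]]].
    destruct (Nat.eq_dec k c).
    + subst. destruct (fresh_c [A2; B2] (c :: L)) as [z [Hz1 Hz2]]. simpl in Hz2.
      assert (~ occurs_c z A2) by (apply Hz1; simpl; auto). assert (~ occurs_c z B2) by (apply Hz1; simpl; auto).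
      exists (Res z (mapc (sw c z) A2)), (Res z (mapc (sw c z) B2)); repeat split.
      * eapply al_trans; [apply al_res; eauto|apply alpha_res_sw; auto].
      * eapply al_trans; [apply al_res; eauto|apply alpha_res_sw; auto].
      * apply E_res. apply E_res_rename; auto.
      * simpl. rewrite cb_sw, sw_l. intros [Hq|Hq]; [auto|apply cb_occ in Hq; auto].
      * simpl. rewrite cb_sw, sw_l. intros [Hq|Hq]; [auto|apply cb_occ in Hq; auto].
    + exists (Res k A2), (Res k B2); repeat split; try apply al_res; try apply E_res; simpl; auto; tauto.
  - destruct IHE as [A2 [B2 [H1 [H2 [H3 [H4 H5]]]]]].
    assert (Hfo: ~ fo k B2) by (rewrite <- (alpha_fo _ _ _ H2); auto).
    destruct (Nat.eq_dec k c).
    + subst. destruct (fresh_c [A2; B2] (c :: L)) as [z [Hz1 Hz2]]. simpl in Hz2.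
      assert (~ occurs_c z A2) by (apply Hz1; simpl; auto). assert (~ occurs_c z B2) by (apply Hz1; simpl; auto).
      exists (Res z (mapc (sw c z) A2)), (Res z (mapc (sw c z) B2)); repeat split.
      * eapply al_trans; [apply al_res; eauto|apply alpha_res_sw; auto].
      * eapply al_trans; [apply al_res; eauto|apply alpha_res_sw; auto].
      * apply E_prot. apply E_prot_rename; auto. rewrite fo_sw, sw_r. auto.
      * simpl. rewrite cb_sw, sw_l. intros [Hq|Hq]; [auto|apply cb_occ in Hq; auto].
      * simpl. rewrite cb_sw, sw_l. intros [Hq|Hq]; [auto|apply cb_occ in Hq; auto].
    + exists (Res k A2), (Res k B2); repeat split; try apply al_res; try apply E_prot; simpl; auto; tauto.
  - exists (Pre (PMatch (NC c0) (NC d) q) Nil), Nil; repeat split; try apply al_refl; try apply E_n1; simpl; auto.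
  - exists (N2 l m y q), (N2B m y2); repeat split; try apply al_refl; try apply E_n2; unfold N2, N2B; simpl; auto.
  - destruct (Nat.eq_dec l c).
    + subst. destruct (fresh_c [Pre (POut (NC (odflt c None)) c) (N2 c (odflt c mm) y q);
                                Pre (POut (NC (odflt c None)) c) (N2B (odflt c mm) y)] [c; odflt c mm]) as [z [Hz1 Hz2]].
      simpl in Hz2.
      exists (N3 z None mm y (mapc_pref (sw c z) q)), (N3B z None mm y); repeat split.
      * apply N3_rename; try discriminate; auto; try (intro; subst; simpl in Hz2; tauto); try (apply Hz1; simpl; auto).
      * apply N3B_rename; try discriminate; auto; try (intro; subst; simpl in Hz2; tauto); try (apply Hz1; simpl; auto).
      * apply E_dead. intro; subst; simpl in Hz2; tauto.
      * rewrite cb_N3. intro; subst; tauto.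
      * rewrite cb_N3B. intro; subst; tauto.
    + exists (N3 l None mm y q), (N3B l None mm y); repeat split; try apply al_refl; try apply E_dead; auto.
      rewrite cb_N3; auto. rewrite cb_N3B; auto.
  - destruct IHE as [A2 [B2 [H1 [H2 [H3 [H4 H5]]]]]].
    destruct (Nat.eq_dec k c).
    + subst. destruct (fresh_c [A2; B2] (c :: L)) as [z [Hz1 Hz2]]. simpl in Hz2.
      assert (~ occurs_c z A2) by (apply Hz1; simpl; auto). assert (~ occurs_c z B2) by (apply Hz1; simpl; auto).
      exists (Res z (mapc (sw c z) A2)), (Res z (mapc (sw c z) B2)); repeat split.
      * eapply al_trans; [apply al_res; eauto|apply alpha_res_sw; auto].
      * eapply al_trans; [apply al_res; eauto|apply alpha_res_sw; auto].
      * apply E_ires. apply (E_mapc (sw c z)) in H3; [|apply sw_inj]. simpl in H3. rewrite sw_l in H3. auto.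
      * simpl. rewrite cb_sw, sw_l. intros [Hq|Hq]; [auto|apply cb_occ in Hq; auto].
      * simpl. rewrite cb_sw, sw_l. intros [Hq|Hq]; [auto|apply cb_occ in Hq; auto].
    + exists (Res k A2), (Res k B2); repeat split; try apply al_res; try apply E_ires; simpl; auto; tauto.
  - destruct IHE as [A3 [B3 [H3 [H4 [H5 [H6 H7]]]]]].
    assert (HI: InForm k A3) by (eapply InForm_alpha; eauto).
    destruct (Nat.eq_dec l c).
    + subst. destruct (fresh_c [Pre (POut (NC (odflt c (Some k))) c) (N2 c (odflt c mm) y q);
                                Pre (POut (NC (odflt c (Some k))) c) (N2B (odflt c mm) y)] [c; k; odflt c mm]) as [z [Hz1 Hz2]].
      simpl in Hz2.
      exists (Par (N3 z (Some k) mm y (mapc_pref (sw c z) q)) A3), (Par (N3B z (Some k) mm y) B3); repeat split.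
      * apply al_par; auto. apply N3_rename; try congruence; auto; try (intro E'; inversion E'; subst; tauto);
        try (intro; subst; simpl in Hz2; tauto); try (apply Hz1; simpl; auto).
      * apply al_par; auto. apply N3B_rename; try congruence; auto; try (intro E'; inversion E'; subst; tauto);
        try (intro; subst; simpl in Hz2; tauto); try (apply Hz1; simpl; auto).
      * apply E_ipar; auto; intro; subst; simpl in *; tauto.
      * cbn [chan_bound]. rewrite cb_N3. intros [Hq|Hq]; [subst; tauto|tauto].
      * cbn [chan_bound]. rewrite cb_N3B. intros [Hq|Hq]; [subst; tauto|tauto].
    + exists (Par (N3 l (Some k) mm y q) A3), (Par (N3B l (Some k) mm y) B3); repeat split;
        try apply al_par; try apply al_refl; try apply E_ipar; auto; cbn [chan_bound]; rewrite ?cb_N3, ?cb_N3B; tauto.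
Qed.


Lemma E_inv_par L pk A1 A2 B : E L pk (Par A1 A2) B ->
  (pk = None /\ exists B1 B2, B = Par B1 B2 /\ E L None A1 B1 /\ E L None A2 B2) \/
  (exists k l mm y q B2, pk = Some k /\ L = [] /\ A1 = N3 l (Some k) mm y q /\
     B = Par (N3B l (Some k) mm y) B2 /\ mm <> Some l /\ k <> l /\ E [] None A2 B2 /\ InForm k A2).
Proof. intros H; inversion H; subst.
  - left; split; auto; eauto.
  - right; do 6 eexists; repeat split; eauto.
Qed.

Lemma E_inv_res L pk k A B : E L pk (Res k A) B -> pk = None /\
  ((exists B', B = Res k B' /\ E (rem k L) None A B') \/
   (exists B', B = Res k B' /\ E (k :: rem k L) None A B' /\ ~ fo k B') \/
   (exists B', B = Res k B' /\ E [] (Some k) A B') \/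
   (exists W, A = Pre (POut (NC k) k) W)).
Proof. intros H; inversion H; subst; split; auto.
  - left; eauto.
  - right; left; eauto.
  - right; right; right. eauto.
  - right; right; left; eauto.
Qed.

Lemma E_inv_pre L pk p A B : E L pk (Pre p A) B -> pk = None /\
  ((exists B', B = Pre p B' /\ E L None A B') \/
   (exists c d q, p = PMatch (NC c) (NC d) q /\ A = Nil /\ B = Nil /\ c <> d) \/
   (exists m y l q y2, p = PIn (NC m) y /\ A = Pre (PMatch (NV y) (NC l) q) Nil /\ B = N2B m y2 /\ In l L)).
Proof. intros H; inversion H; subst; split; auto.
  - left; eauto.
  - right; left; eauto 8.
  - right; right. do 5 eexists; repeat split; eauto.
Qed.

Lemma E_inv_rep L pk A B : E L pk (Rep A) B -> pk = None /\ exists B', B = Rep B' /\ E L None A B'.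
Proof. intros H; inversion H; subst; split; eauto. Qed.

Lemma alpha_par_r X P R : alpha X (Par P R) -> exists P0 R0, X = Par P0 R0 /\ alpha P0 P /\ alpha R0 R.
Proof. intros H. apply al_sym, alpha_par in H. destruct H as [P0 [R0 [-> [H1 H2]]]].
  exists P0, R0; split; auto; split; apply al_sym; auto. Qed.
Lemma alpha_rep_r X P : alpha X (Rep P) -> exists P0, X = Rep P0 /\ alpha P0 P.
Proof. intros H. apply al_sym, alpha_rep in H. destruct H as [P0 [-> H1]].
  exists P0; split; auto; apply al_sym; auto. Qed.

Definition achans (a : act) : list chan :=
  match a with AOut k l | AIn k l | ABOut k l => [k; l] | ATau => [] end.
Lemma achans_in a c : act_names a c -> In c (achans a).
Proof. destruct a; simpl; intuition subst; auto. Qed.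
Lemma mapa_id f a : (forall c, act_names a c -> f c = c) -> mapa f a = a.
Proof. destruct a; simpl; intros H; auto; rewrite !H; auto. Qed.

Definition condF (L : list chan) (a : act) (B : proc) :=
  (forall l, In l L -> ~ fo l B) /\ (forall k c, a = AIn k c -> ~ In c L).

Definition concl (pk : option chan) (L : list chan) (a : act) (A' B : proc) :=
  match pk with
  | None => exists A0 B' B0, trans B a B' /\ alpha A' A0 /\ alpha B0 B' /\ E L None A0 B0
  | Some k => (exists d, a = ABOut k d) \/ (exists c, a = AIn k c) \/
              (a = ATau /\ exists A0 B' B0, trans B a B' /\ alpha A' A0 /\ alpha B0 B' /\ E L None A0 B0)
  end.

Lemma act_bn_names a c : act_bn a c -> act_names a c.
Proof. destruct a; simpl; intros; try tauto; auto. Qed.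
Lemma mapc_sw_sym a b P : mapc (sw a b) P = mapc (sw b a) P.
Proof. apply mapc_ext; intros; apply sw_sym. Qed.
Lemma occ_N3B_body c l kk mm y : occurs_c c (Pre (POut (NC (odflt l kk)) l) (N2B (odflt l mm) y)) ->
  c = odflt l kk \/ c = l \/ c = odflt l mm.
Proof. unfold N2B; simpl. intuition congruence. Qed.
Lemma occ_N3_body c l kk mm y q : occurs_c c (Pre (POut (NC (odflt l kk)) l) (N2 l (odflt l mm) y q)) ->
  c = odflt l kk \/ c = l \/ c = odflt l mm \/ pchan c q.
Proof. unfold N2; simpl. intuition congruence. Qed.
Lemma subst_Nil x l : subst Nil x l = Nil.
Proof. reflexivity. Qed.
Lemma trans_N2B m y l : trans (N2B m y) (AIn m l) Nil.
Proof. change Nil with (subst Nil y l). unfold N2B. apply t_in. simpl; auto. Qed.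
Lemma subst_match_nil y l0 q l : exists q', subst (Pre (PMatch (NV y) (NC l0) q) Nil) y l = Pre (PMatch (NC l) (NC l0) q') Nil.
Proof. simpl. rewrite Nat.eqb_refl. eexists. f_equal. destruct (pbv q); [destruct (Nat.eqb _ _)|]; auto. Qed.
Lemma trans_N2 l0 m y q l : exists q', trans (N2 l0 m y q) (AIn m l) (Pre (PMatch (NC l) (NC l0) q') Nil).
Proof. destruct (subst_match_nil y l0 q l) as [q' E']. exists q'. rewrite <- E'. apply t_in. simpl; auto. Qed.


Lemma condF_sub L L' a B : condF L a B -> (forall c, In c L' -> In c L) -> condF L' a B.
Proof. intros [H1 H2] H. split; intros; eauto. intro; eapply H2; eauto. Qed.

Lemma FW_n n : forall A, size A <= n -> forall L pk B, E L pk A B ->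
  forall A1 a A', alpha A A1 -> trans A1 a A' -> condF L a B -> concl pk L a A' B.
Proof.
  induction n as [|n IHn]; intros A Hs L pk B HE A1 a A' Ha Ht HC; [pose proof (size_pos A); lia|].
  revert A Hs L pk B HE Ha HC.
  induction Ht; intros A0 Hs L pk B HE Ha HC.
  -
    destruct (alpha_pre _ _ _ (al_sym _ _ Ha)) as [p' [P' [-> [[N [-> Hp]]|[x [x' [S _]]]]]]]; [|discriminate].
    apply E_inv_pre in HE.
    destruct HE as [-> [[B' [-> HE]]|[[c [d [q [Ep _]]]]|[m [y [l0 [q [y2 [Ep _]]]]]]]]]; try discriminate.
    simpl. exists P', B', B'. repeat split; [apply t_out|auto|apply al_refl|auto].
  -
    destruct (alpha_pre _ _ _ (al_sym _ _ Ha)) as [p' [P' [-> [[N _]|[x0 [x' [S [-> Hsw]]]]]]]]; [discriminate|].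
    simpl in S; inversion S; subst x0. simpl in *.
    apply E_inv_pre in HE.
    destruct HE as [-> [[B' [-> HE]]|[[c [d [q [Ep _]]]]|[m [y [l0 [q [y2 [Ep [EA [-> Hl0]]]]]]]]]]]; try discriminate.
    + destruct (E_RA _ _ _ _ l HE) as [P2 [B2 [H1 [H2 [H3 [H4 H5]]]]]].
      simpl. exists (subst P2 x' l), (subst B2 x' l), (subst B2 x' l). repeat split.
      * eapply t_alpha. apply al_pre; eauto. apply t_in; auto.
      * eapply TIN; [|eauto|eauto]. eapply al_trans; [apply al_sym; exact Ha|]. apply al_pre; auto.
      * apply al_refl.
      * apply E_subst; auto. apply (proj2 HC k l); auto.
    + inversion Ep; subst m y. subst P'.
      destruct (subst_match_nil x' l0 q l) as [q' Eq'].
      simpl. exists (Pre (PMatch (NC l) (NC l0) q') Nil), Nil, Nil. repeat split.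
      * apply trans_N2B.
      * rewrite <- Eq'. eapply TIN; [apply al_sym; exact Ha|auto|simpl; auto].
      * apply al_refl.
      * apply E_n1. intro; subst. apply (proj2 HC k l0 eq_refl); auto.
  -
    destruct (alpha_peel _ _ _ _ _ (al_sym _ _ Ha)) as [q' [R' [-> Hq]]].
    apply E_inv_pre in HE.
    destruct HE as [-> [[B' [-> HE]]|[[c [d [q [Ep [-> [-> Hcd]]]]]]|[m [y [l0 [q [y2 [Ep _]]]]]]]]]; try discriminate.
    + assert (Hs': size (Pre q' R') <= S n) by (simpl in *; lia).
      destruct (IHHt (Pre q' R') Hs' L None (Pre q' B') (E_pre _ _ _ _ HE) (al_sym _ _ Hq) HC)
        as [A0s [B's [B0s [Ht2 [Ha2 [Hb2 HE2]]]]]].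
      simpl. exists A0s, B's, B0s. repeat split; auto. apply t_match; auto.
    + inversion Ep; subst. congruence.
  -
    pose proof Ha as Ha0.
    destruct (alpha_res _ _ _ (al_sym _ _ Ha)) as [k' [P'' [-> Hsw]]].
    apply E_inv_res in HE. destruct HE as [-> HE].
    destruct HE as [[B' [-> HE]]|[[B' [-> [HE Hfo]]]|[[B' [-> HE]]|[W ->]]]].
    4:{ exfalso. eapply OutSelfDead. apply t_res; eauto. apply al_sym; exact Ha0. }
    all: destruct (fresh_c [P; P'; P''; B'] (k :: k' :: L ++ achans al)) as [z [Hz1 Hz2]].
    all: simpl in Hz2; rewrite in_app_iff in Hz2.
    all: assert (Hz3: ~ occurs_c z P) by (apply Hz1; simpl; auto).
    all: assert (Hz4: ~ occurs_c z P') by (apply Hz1; simpl; auto).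
    all: assert (Hz5: ~ occurs_c z P'') by (apply Hz1; simpl; auto).
    all: assert (Hz6: ~ occurs_c z B') by (apply Hz1; simpl; auto).
    all: assert (Hza: ~ act_names al z) by (intro Hq; apply achans_in in Hq; tauto).
    all: pose proof (trans_sw k z _ _ _ Ht) as Ht'.
    all: rewrite mapa_id in Ht' by (intros c Hc; apply sw_o; intro; subst; tauto).
    all: assert (Hsz: size (mapc (sw k' z) P'') <= n) by (rewrite size_mapc; simpl in Hs; lia).
    all: specialize (Hsw z Hz3 Hz5).
    +
      assert (HC': condF (rem z L) al (mapc (sw k' z) B')).
      { split.
        - intros l0 Hl0 Hf. rewrite in_rem in Hl0. rewrite fo_sw in Hf.
          destruct (Nat.eq_dec l0 k').
          + subst. rewrite sw_l in Hf. apply Hz6, free_occ, fo_free; auto.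
          + rewrite sw_o in Hf by tauto. apply (proj1 HC l0); [tauto|]. simpl; auto.
        - intros k0 c0 Ea Hc. rewrite in_rem in Hc. apply (proj2 HC k0 c0); tauto. }
      destruct (IHn _ Hsz (rem z L) None (mapc (sw k' z) B') (E_res_rename L k' P'' B' z HE ltac:(tauto))
        _ _ _ (al_sym _ _ Hsw) Ht' HC') as [A0s [B's [B0s [Ht2 [Ha2 [Hb2 HE2]]]]]].
      simpl. exists (Res z A0s), (Res z B's), (Res z B0s). repeat split.
      * eapply t_alpha. apply (alpha_res_sw k' z); auto. apply t_res; auto.
      * eapply al_trans. apply (alpha_res_sw k z); auto. apply al_res; auto.
      * apply al_res; auto.
      * apply E_res; auto.
    +
      assert (HC': condF (z :: rem z L) al (mapc (sw k' z) B')).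
      { split.
        - intros l0 Hl0 Hf. simpl in Hl0. rewrite in_rem in Hl0. rewrite fo_sw in Hf.
          destruct Hl0 as [Hl0|Hl0]. subst. rewrite sw_r in Hf. auto.
          destruct (Nat.eq_dec l0 k').
          + subst. rewrite sw_l in Hf. apply Hz6, free_occ, fo_free; auto.
          + rewrite sw_o in Hf by tauto. apply (proj1 HC l0); [tauto|]. simpl; auto.
        - intros k0 c0 Ea Hc. simpl in Hc. rewrite in_rem in Hc. destruct Hc as [Hc|Hc].
          subst. apply Hza. subst; simpl; auto. apply (proj2 HC k0 c0); tauto. }
      destruct (IHn _ Hsz (z :: rem z L) None (mapc (sw k' z) B') (E_prot_rename L k' P'' B' z HE ltac:(tauto))
        _ _ _ (al_sym _ _ Hsw) Ht' HC') as [A0s [B's [B0s [Ht2 [Ha2 [Hb2 HE2]]]]]].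
      simpl. exists (Res z A0s), (Res z B's), (Res z B0s). repeat split.
      * eapply t_alpha. apply (alpha_res_sw k' z); auto. apply t_res; auto.
      * eapply al_trans. apply (alpha_res_sw k z); auto. apply al_res; auto.
      * apply al_res; auto.
      * apply E_prot; auto. intro Hf. rewrite (alpha_fo _ _ _ Hb2) in Hf.
        destruct (FO _ _ _ Ht2 z Hf) as [Hf2|Hf2].
        -- rewrite fo_sw, sw_r in Hf2. auto.
        -- apply Hza, act_bn_names; auto.
    +
      pose proof (E_mapc (sw k' z) _ _ _ _ (sw_inj k' z) HE) as HE'. simpl in HE'. rewrite sw_l in HE'.
      assert (HC': condF [] al (mapc (sw k' z) B')) by (split; intros; simpl in *; tauto).
      pose proof (IHn _ Hsz [] (Some z) (mapc (sw k' z) B') HE' _ _ _ (al_sym _ _ Hsw) Ht' HC') as IH.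
      simpl in IH. destruct IH as [[d Ed]|[[c0 Ec]|[Et [A0s [B's [B0s [Ht2 [Ha2 [Hb2 HE2]]]]]]]]].
      * subst. simpl in Hza; tauto.
      * subst. simpl in Hza; tauto.
      * simpl. exists (Res z A0s), (Res z B's), (Res z B0s). repeat split.
        -- eapply t_alpha. apply (alpha_res_sw k' z); auto. apply t_res; auto.
        -- eapply al_trans. apply (alpha_res_sw k z); auto. apply al_res; auto.
        -- apply al_res; auto.
        -- apply E_res. eapply E_index; eauto. simpl; tauto.
  -
    pose proof Ha as Ha0.
    destruct (alpha_res _ _ _ (al_sym _ _ Ha)) as [l' [P'' [-> Hsw]]].
    pose proof HE as HE0.
    apply E_inv_res in HE. destruct HE as [-> HE].
    destruct HE as [[B' [-> HE]]|[[B' [-> [HE Hfo]]]|[[B' [-> HE]]|[W ->]]]].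
    4:{ exfalso. eapply OutSelfDead. apply t_open; eauto. apply al_sym; exact Ha0. }
    all: destruct (fresh_c [P; Q; P''; B'] (k :: l :: l' :: L)) as [z [Hz1 Hz2]].
    all: simpl in Hz2.
    all: assert (Hz3: ~ occurs_c z P) by (apply Hz1; simpl; auto).
    all: assert (Hz4: ~ occurs_c z Q) by (apply Hz1; simpl; auto).
    all: assert (Hz5: ~ occurs_c z P'') by (apply Hz1; simpl; auto).
    all: assert (Hz6: ~ occurs_c z B') by (apply Hz1; simpl; auto).
    all: pose proof (trans_sw l z _ _ _ Ht) as Ht'.
    all: simpl in Ht'; rewrite sw_l, (sw_o l z k) in Ht' by (auto; intro; subst; tauto).
    all: assert (Hsz: size (mapc (sw l' z) P'') <= n) by (rewrite size_mapc; simpl in Hs; lia).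
    all: specialize (Hsw z Hz3 Hz5).
    +
      assert (HC': condF (rem z L) (AOut k z) (mapc (sw l' z) B')).
      { split.
        - intros l0 Hl0 Hf. rewrite in_rem in Hl0. rewrite fo_sw in Hf.
          destruct (Nat.eq_dec l0 l').
          + subst. rewrite sw_l in Hf. apply Hz6, free_occ, fo_free; auto.
          + rewrite sw_o in Hf by tauto. apply (proj1 HC l0); [tauto|]. simpl; auto.
        - intros k0 c0 Ea Hc. discriminate. }
      destruct (IHn _ Hsz (rem z L) None (mapc (sw l' z) B') (E_res_rename L l' P'' B' z HE ltac:(tauto))
        _ _ _ (al_sym _ _ Hsw) Ht' HC') as [A0s [B's [B0s [Ht2 [Ha2 [Hb2 HE2]]]]]].
      assert (Hfl: ~ free_chan l (Res l' B')).
      { intro Hf. apply (E_free _ _ _ _ _ HE0) in Hf. rewrite (alpha_free _ _ _ Ha0) in Hf. simpl in Hf; tauto. }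
      simpl. exists (mapc (sw z l) A0s), (mapc (sw z l) B's), (mapc (sw z l) B0s). repeat split.
      * eapply t_alpha; [|apply t_open].
        -- eapply al_trans. apply (alpha_res_sw l' z); auto.
           assert (HX: alpha (Res z (mapc (sw l' z) B')) (mapc (sw z l) (Res z (mapc (sw l' z) B')))).
           { apply alpha_swap_nonfree; simpl. tauto.
             rewrite free_sw. destruct (Nat.eq_dec l l').
             - subst. rewrite sw_l. intros [_ Hf]. apply Hz6, free_occ; auto.
             - rewrite sw_o by (auto; intro; subst; tauto). intros [_ Hf]. apply Hfl. simpl; split; auto. }
           simpl in HX. rewrite sw_l in HX. exact HX.
        -- pose proof (trans_sw z l _ _ _ Ht2) as Ht3. simpl in Ht3.
           rewrite sw_l, (sw_o z l k) in Ht3 by (auto; intro; subst; tauto). exact Ht3.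
        -- auto.
      * apply (alpha_sw l z) in Ha2. rewrite sw_mapc_inv in Ha2. rewrite mapc_sw_sym. exact Ha2.
      * apply alpha_sw; auto.
      * pose proof (E_mapc (sw z l) _ _ _ _ (sw_inj z l) HE2) as HE3. simpl in HE3.
        eapply E_index; eauto. intros c Hc Hf. apply in_map_iff in Hc. destruct Hc as [c0 [<- Hc]].
        rewrite in_rem in Hc. destruct Hc as [Hc Hc'].
        destruct (Nat.eq_dec c0 l).
        -- subst. exfalso. rewrite sw_r in Hf. rewrite free_sw, sw_l in Hf.
           rewrite <- (alpha_free _ _ _ Ha2) in Hf. rewrite free_sw, sw_l in Hf. apply Hz4, free_occ; auto.
        -- rewrite sw_o by auto. auto.
    +
      assert (HC': condF (z :: rem z L) (AOut k z) (mapc (sw l' z) B')).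
      { split.
        - intros l0 Hl0 Hf. simpl in Hl0. rewrite in_rem in Hl0. rewrite fo_sw in Hf.
          destruct Hl0 as [Hl0|Hl0]. subst. rewrite sw_r in Hf. auto.
          destruct (Nat.eq_dec l0 l').
          + subst. rewrite sw_l in Hf. apply Hz6, free_occ, fo_free; auto.
          + rewrite sw_o in Hf by tauto. apply (proj1 HC l0); [tauto|]. simpl; auto.
        - intros k0 c0 Ea Hc. discriminate. }
      destruct (IHn _ Hsz (z :: rem z L) None (mapc (sw l' z) B') (E_prot_rename L l' P'' B' z HE ltac:(tauto))
        _ _ _ (al_sym _ _ Hsw) Ht' HC') as [A0s [B's [B0s [Ht2 [Ha2 [Hb2 HE2]]]]]].
      exfalso. pose proof (FOout _ _ _ Ht2 k z eq_refl) as Hf. rewrite fo_sw, sw_r in Hf. auto.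
    +
      pose proof (E_mapc (sw l' z) _ _ _ _ (sw_inj l' z) HE) as HE'. simpl in HE'. rewrite sw_l in HE'.
      assert (HC': condF [] (AOut k z) (mapc (sw l' z) B')) by (split; intros; simpl in *; tauto).
      pose proof (IHn _ Hsz [] (Some z) (mapc (sw l' z) B') HE' _ _ _ (al_sym _ _ Hsw) Ht' HC') as IH.
      simpl in IH. destruct IH as [[d Ed]|[[c0 Ec]|[Et _]]]; discriminate.
  -
    destruct (alpha_par_r _ _ _ Ha) as [P0 [R0 [-> [HP HR]]]].
    apply E_inv_par in HE.
    destruct HE as [[-> [B1 [B2 [-> [HE1 HE2]]]]]|[k [l [mm [y [q [B2 [-> [-> [-> [-> [Hm [Hkl [HE2 HI]]]]]]]]]]]]]].
    + assert (Hs1: size P0 <= S n) by (simpl in Hs; lia).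
      assert (HC1: condF L al B1) by (destruct HC as [HC1 HC2]; split; auto; intros l0 Hl0 Hf; apply (HC1 l0 Hl0); simpl; auto).
      destruct (IHHt P0 Hs1 L None B1 HE1 HP HC1) as [A0s [B's [B0s [Ht2 [Ha2 [Hb2 HE3]]]]]].
      simpl. exists (Par A0s R0), (Par B's B2), (Par B0s B2). repeat split.
      * apply t_parl; auto. intros c Hc Hf. apply (H c Hc). rewrite <- (alpha_free _ _ _ HR). eapply E_free; eauto.
      * apply al_par; auto. apply al_sym; auto.
      * apply al_par; auto; apply al_refl.
      * apply E_par; auto.
    + simpl. left. destruct (N3_trans _ _ _ Ht l k mm y q (al_sym _ _ HP) Hkl Hm) as [d [Ed _]]. eauto.
  -
    destruct (alpha_par_r _ _ _ Ha) as [R0 [P0 [-> [HR HP]]]].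
    apply E_inv_par in HE.
    destruct HE as [[-> [B1 [B2 [-> [HE1 HE2]]]]]|[k [l [mm [y [q [B2 [-> [-> [-> [-> [Hm [Hkl [HE2 HI]]]]]]]]]]]]]].
    + assert (Hs1: size P0 <= S n) by (simpl in Hs; lia).
      assert (HC1: condF L al B2) by (destruct HC as [HC1 HC2]; split; auto; intros l0 Hl0 Hf; apply (HC1 l0 Hl0); simpl; auto).
      destruct (IHHt P0 Hs1 L None B2 HE2 HP HC1) as [A0s [B's [B0s [Ht2 [Ha2 [Hb2 HE3]]]]]].
      simpl. exists (Par R0 A0s), (Par B1 B's), (Par B1 B0s). repeat split.
      * apply t_parr; auto. intros c Hc Hf. apply (H c Hc). rewrite <- (alpha_free _ _ _ HR). eapply E_free; eauto.
      * apply al_par; auto. apply al_sym; auto.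
      * apply al_par; auto; apply al_refl.
      * apply E_par; auto.
    + simpl. right; left. destruct HI as [x [W ->]]. exact (inp_inv _ _ _ Ht k x W (al_sym _ _ HP)).
  -
    destruct (alpha_par_r _ _ _ Ha) as [P0 [Q0 [-> [HP HQ]]]].
    apply E_inv_par in HE.
    destruct HE as [[-> [B1 [B2 [-> [HE1 HE2]]]]]|[k0 [l0 [mm [y [q [B2 [-> [-> [-> [-> [Hm [Hkl [HE2 HI]]]]]]]]]]]]]].
    + assert (Hs1: size P0 <= S n) by (simpl in Hs; lia).
      assert (Hs2: size Q0 <= S n) by (simpl in Hs; lia).
      assert (HC1: condF L (AOut k l) B1) by (destruct HC as [HC1 HC2]; split; [intros l1 Hl1 Hf; apply (HC1 l1 Hl1); simpl; auto|intros; discriminate]).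
      destruct (IHHt1 P0 Hs1 L None B1 HE1 HP HC1) as [A0p [B'p [B0p [Htp [Hap [Hbp HEp]]]]]].
      assert (Hl: ~ In l L) by (intro Hl; apply (proj1 HC l Hl); simpl; left; eapply FOout; eauto).
      assert (HC2: condF L (AIn k l) B2).
      { destruct HC as [HC1' HC2']; split; [intros l1 Hl1 Hf; apply (HC1' l1 Hl1); simpl; auto|intros k1 c1 Ea; inversion Ea; subst; auto]. }
      destruct (IHHt2 Q0 Hs2 L None B2 HE2 HQ HC2) as [A0q [B'q [B0q [Htq [Haq [Hbq HEq]]]]]].
      simpl. exists (Par A0p A0q), (Par B'p B'q), (Par B0p B0q). repeat split.
      * eapply t_comml; eauto.
      * apply al_par; auto.
      * apply al_par; auto.
      * apply E_par; auto.
    + exfalso. destruct (N3_trans _ _ _ Ht1 l0 k0 mm y q (al_sym _ _ HP) Hkl Hm) as [d [Ed _]]. discriminate.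
  -
    destruct (alpha_par_r _ _ _ Ha) as [P0 [Q0 [-> [HP HQ]]]].
    apply E_inv_par in HE.
    destruct HE as [[-> [B1 [B2 [-> [HE1 HE2]]]]]|[k0 [l0 [mm [y [q [B2 [-> [-> [-> [-> [Hm [Hkl [HE2 HI]]]]]]]]]]]]]].
    + assert (Hs1: size P0 <= S n) by (simpl in Hs; lia).
      assert (Hs2: size Q0 <= S n) by (simpl in Hs; lia).
      assert (HC2: condF L (AOut k l) B2) by (destruct HC as [HC1 HC2]; split; [intros l1 Hl1 Hf; apply (HC1 l1 Hl1); simpl; auto|intros; discriminate]).
      destruct (IHHt2 Q0 Hs2 L None B2 HE2 HQ HC2) as [A0q [B'q [B0q [Htq [Haq [Hbq HEq]]]]]].
      assert (Hl: ~ In l L) by (intro Hl; apply (proj1 HC l Hl); simpl; right; eapply FOout; eauto).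
      assert (HC1: condF L (AIn k l) B1).
      { destruct HC as [HC1' HC2']; split; [intros l1 Hl1 Hf; apply (HC1' l1 Hl1); simpl; auto|intros k1 c1 Ea; inversion Ea; subst; auto]. }
      destruct (IHHt1 P0 Hs1 L None B1 HE1 HP HC1) as [A0p [B'p [B0p [Htp [Hap [Hbp HEp]]]]]].
      simpl. exists (Par A0p A0q), (Par B'p B'q), (Par B0p B0q). repeat split.
      * eapply t_commr; eauto.
      * apply al_par; auto.
      * apply al_par; auto.
      * apply E_par; auto.
    + exfalso. destruct (N3_trans _ _ _ Ht1 l0 k0 mm y q (al_sym _ _ HP) Hkl Hm) as [d [Ed _]]. discriminate.
  -
    destruct (alpha_par_r _ _ _ Ha) as [P0 [Q0 [-> [HP HQ]]]].
    apply E_inv_par in HE.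
    destruct HE as [[-> [B1 [B2 [-> [HE1 HE2]]]]]|[k0 [l0 [mm [y [q [B2 [-> [-> [-> [-> [Hm [Hkl [HE2 HI]]]]]]]]]]]]]].
    + assert (Hs1: size P0 <= S n) by (simpl in Hs; lia).
      assert (Hs2: size Q0 <= S n) by (simpl in Hs; lia).
      destruct (BNfree _ _ _ Ht1 k l eq_refl) as [Hkl' Hfp].
      assert (Hfp0: ~ free_chan l P0) by (rewrite (alpha_free _ _ _ HP); auto).
      assert (Hfq0: ~ free_chan l Q0) by (rewrite (alpha_free _ _ _ HQ); auto).
      assert (HE1': E (rem l L) None P0 B1) by (eapply E_index; eauto; intros c Hc Hf; rewrite in_rem; split; auto; intro; subst; auto).
      assert (HE2': E (rem l L) None Q0 B2) by (eapply E_index; eauto; intros c Hc Hf; rewrite in_rem; split; auto; intro; subst; auto).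
      assert (HC1: condF (rem l L) (ABOut k l) B1).
      { destruct HC as [HC1 HC2]; split; [intros l1 Hl1 Hf; rewrite in_rem in Hl1; apply (HC1 l1); [tauto|]; simpl; auto|intros; discriminate]. }
      assert (HC2: condF (rem l L) (AIn k l) B2).
      { destruct HC as [HC1' HC2']; split; [intros l1 Hl1 Hf; rewrite in_rem in Hl1; apply (HC1' l1); [tauto|]; simpl; auto|].
        intros k1 c1 Ea; inversion Ea; subst. rewrite in_rem; tauto. }
      destruct (IHHt1 P0 Hs1 _ None B1 HE1' HP HC1) as [A0p [B'p [B0p [Htp [Hap [Hbp HEp]]]]]].
      destruct (IHHt2 Q0 Hs2 _ None B2 HE2' HQ HC2) as [A0q [B'q [B0q [Htq [Haq [Hbq HEq]]]]]].
      simpl. exists (Res l (Par A0p A0q)), (Res l (Par B'p B'q)), (Res l (Par B0p B0q)). repeat split.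
      * eapply t_closel; eauto. intro Hf. apply Hfq0. eapply E_free; eauto.
      * apply al_res, al_par; auto.
      * apply al_res, al_par; auto.
      * apply E_res, E_par; auto.
    + destruct (N3_trans _ _ _ Ht1 l0 k0 mm y q (al_sym _ _ HP) Hkl Hm) as [d [Ed [Hkd [Hmd [q' Hq']]]]].
      inversion Ed; subst k0 d.
      assert (Hs2: size Q0 <= S n) by (simpl in Hs; lia).
      assert (HC2: condF [] (AIn k l) B2) by (split; intros; simpl in *; tauto).
      destruct (IHHt2 Q0 Hs2 [] None B2 HE2 HQ HC2) as [A0q [B'q [B0q [Htq [Haq [Hbq HEq]]]]]].
      simpl. right; right. split; auto.
      exists (Res l (Par (N2 l (odflt l mm) y q') A0q)), (Res l (Par (N2B (odflt l mm) y) B'q)),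
             (Res l (Par (N2B (odflt l mm) y) B0q)). repeat split.
      * eapply t_closel; [| exact Htq |].
        -- destruct (Nat.eq_dec l l0).
           ++ subst. apply N3B_open; auto.
           ++ eapply t_alpha. apply (N3B_rename l0 (Some k) mm y l); try congruence.
              intro Ho; apply occ_N3B_body in Ho; simpl in Ho.
              destruct Ho as [Ho|[Ho|Ho]]; [congruence|congruence|].
              destruct mm; simpl in Ho; subst; congruence.
              apply N3B_open; auto.
        -- intro Hf. apply (E_free _ _ _ _ _ HE2) in Hf. rewrite (alpha_free _ _ _ HQ) in Hf. auto.
      * apply al_res, al_par; auto.
      * apply al_res, al_par; [apply al_refl|auto].
      * apply E_prot.
        -- simpl. apply E_par. apply E_n2; simpl; auto. eapply E_index; eauto. simpl; tauto.
        -- intro Hf. simpl in Hf. destruct Hf as [Hf|Hf]. unfold N2B in Hf; simpl in Hf; tauto.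
           rewrite (alpha_fo _ _ _ Hbq) in Hf. destruct (FO _ _ _ Htq l Hf) as [Hf2|Hf2]; [|simpl in Hf2; tauto].
           apply fo_free in Hf2. apply (E_free _ _ _ _ _ HE2) in Hf2. rewrite (alpha_free _ _ _ HQ) in Hf2. auto.
  -
    destruct (alpha_par_r _ _ _ Ha) as [P0 [Q0 [-> [HP HQ]]]].
    apply E_inv_par in HE.
    destruct HE as [[-> [B1 [B2 [-> [HE1 HE2]]]]]|[k0 [l0 [mm [y [q [B2 [-> [-> [-> [-> [Hm [Hkl [HE2 HI]]]]]]]]]]]]]].
    + assert (Hs1: size P0 <= S n) by (simpl in Hs; lia).
      assert (Hs2: size Q0 <= S n) by (simpl in Hs; lia).
      destruct (BNfree _ _ _ Ht2 k l eq_refl) as [Hkl' Hfq].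
      assert (Hfp0: ~ free_chan l P0) by (rewrite (alpha_free _ _ _ HP); auto).
      assert (Hfq0: ~ free_chan l Q0) by (rewrite (alpha_free _ _ _ HQ); auto).
      assert (HE1': E (rem l L) None P0 B1) by (eapply E_index; eauto; intros c Hc Hf; rewrite in_rem; split; auto; intro; subst; auto).
      assert (HE2': E (rem l L) None Q0 B2) by (eapply E_index; eauto; intros c Hc Hf; rewrite in_rem; split; auto; intro; subst; auto).
      assert (HC2: condF (rem l L) (ABOut k l) B2).
      { destruct HC as [HC1 HC2]; split; [intros l1 Hl1 Hf; rewrite in_rem in Hl1; apply (HC1 l1); [tauto|]; simpl; auto|intros; discriminate]. }
      assert (HC1: condF (rem l L) (AIn k l) B1).
      { destruct HC as [HC1' HC2']; split; [intros l1 Hl1 Hf; rewrite in_rem in Hl1; apply (HC1' l1); [tauto|]; simpl; auto|].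
        intros k1 c1 Ea; inversion Ea; subst. rewrite in_rem; tauto. }
      destruct (IHHt1 P0 Hs1 _ None B1 HE1' HP HC1) as [A0p [B'p [B0p [Htp [Hap [Hbp HEp]]]]]].
      destruct (IHHt2 Q0 Hs2 _ None B2 HE2' HQ HC2) as [A0q [B'q [B0q [Htq [Haq [Hbq HEq]]]]]].
      simpl. exists (Res l (Par A0p A0q)), (Res l (Par B'p B'q)), (Res l (Par B0p B0q)). repeat split.
      * eapply t_closer; eauto. intro Hf. apply Hfp0. eapply E_free; eauto.
      * apply al_res, al_par; auto.
      * apply al_res, al_par; auto.
      * apply E_res, E_par; auto.
    + exfalso. destruct (N3_trans _ _ _ Ht1 l0 k0 mm y q (al_sym _ _ HP) Hkl Hm) as [d [Ed _]]. discriminate.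
  -
    destruct (alpha_rep_r _ _ Ha) as [P0 [-> HP]].
    apply E_inv_rep in HE. destruct HE as [-> [B' [-> HE]]].
    assert (Hs1: size P0 <= S n) by (simpl in Hs; lia).
    destruct (IHHt P0 Hs1 L None B' HE HP HC) as [A0s [B's [B0s [Ht2 [Ha2 [Hb2 HE3]]]]]].
    simpl. exists (Par A0s (Rep P0)), (Par B's (Rep B')), (Par B0s (Rep B')). repeat split.
    * apply t_rep_act; auto.
    * apply al_par; auto. apply al_rep, al_sym; auto.
    * apply al_par; auto; apply al_refl.
    * apply E_par; auto. apply E_rep; auto.
  -
    destruct (alpha_rep_r _ _ Ha) as [P0 [-> HP]].
    apply E_inv_rep in HE. destruct HE as [-> [B' [-> HE]]].
    assert (Hs1: size P0 <= S n) by (simpl in Hs; lia).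
    assert (HC1: condF L (AOut k l) B') by (destruct HC as [HC1 HC2]; split; auto; intros; discriminate).
    destruct (IHHt1 P0 Hs1 L None B' HE HP HC1) as [A0a [B'a [B0a [Hta [Haa [Hba HEa]]]]]].
    assert (Hl: ~ In l L) by (intro Hl; apply (proj1 HC l Hl); simpl; eapply FOout; eauto).
    assert (HC2: condF L (AIn k l) B') by (destruct HC as [HC1' HC2']; split; auto; intros k1 c1 Ea; inversion Ea; subst; auto).
    destruct (IHHt2 P0 Hs1 L None B' HE HP HC2) as [A0b [B'b [B0b [Htb [Hab [Hbb HEb]]]]]].
    simpl. exists (Par (Par A0a A0b) (Rep P0)), (Par (Par B'a B'b) (Rep B')), (Par (Par B0a B0b) (Rep B')). repeat split.
    * eapply t_rep_comm; eauto.
    * apply al_par; [apply al_par; auto|apply al_rep, al_sym; auto].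
    * apply al_par; [apply al_par; auto|apply al_refl].
    * apply E_par; [apply E_par; auto|apply E_rep; auto].
  -
    destruct (alpha_rep_r _ _ Ha) as [P0 [-> HP]].
    apply E_inv_rep in HE. destruct HE as [-> [B' [-> HE]]].
    assert (Hs1: size P0 <= S n) by (simpl in Hs; lia).
    assert (Hfp0: ~ free_chan l P0) by (rewrite (alpha_free _ _ _ HP); auto).
    assert (HE': E (rem l L) None P0 B') by (eapply E_index; eauto; intros c Hc Hf; rewrite in_rem; split; auto; intro; subst; auto).
    assert (HC1: condF (rem l L) (ABOut k l) B').
    { destruct HC as [HC1 HC2]; split; [intros l1 Hl1 Hf; rewrite in_rem in Hl1; apply (HC1 l1); [tauto|]; simpl; auto|intros; discriminate]. }
    assert (HC2: condF (rem l L) (AIn k l) B').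
    { destruct HC as [HC1' HC2']; split; [intros l1 Hl1 Hf; rewrite in_rem in Hl1; apply (HC1' l1); [tauto|]; simpl; auto|].
      intros k1 c1 Ea; inversion Ea; subst. rewrite in_rem; tauto. }
    destruct (IHHt1 P0 Hs1 _ None B' HE' HP HC1) as [A0a [B'a [B0a [Hta [Haa [Hba HEa]]]]]].
    destruct (IHHt2 P0 Hs1 _ None B' HE' HP HC2) as [A0b [B'b [B0b [Htb [Hab [Hbb HEb]]]]]].
    simpl. exists (Par (Res l (Par A0a A0b)) (Rep P0)), (Par (Res l (Par B'a B'b)) (Rep B')),
      (Par (Res l (Par B0a B0b)) (Rep B')). repeat split.
    * eapply t_rep_close; eauto. intro Hf. apply Hfp0. eapply E_free; eauto.
    * apply al_par; [apply al_res, al_par; auto|apply al_rep, al_sym; auto].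
    * apply al_par; [apply al_res, al_par; auto|apply al_refl].
    * apply E_par; [apply E_res, E_par; auto|apply E_rep; auto].
  -
    eapply IHHt; eauto. eapply al_trans; eauto.
Qed.



Lemma EB_inv_par L pk A B1 B2 : E L pk A (Par B1 B2) ->
  (pk = None /\ exists A1 A2, A = Par A1 A2 /\ E L None A1 B1 /\ E L None A2 B2) \/
  (exists k l mm y q A2, pk = Some k /\ L = [] /\ B1 = N3B l (Some k) mm y /\
     A = Par (N3 l (Some k) mm y q) A2 /\ mm <> Some l /\ k <> l /\ E [] None A2 B2 /\ InForm k A2).
Proof. intros H; inversion H; subst.
  - left; split; auto; eauto.
  - right; do 6 eexists; repeat split; eauto.
Qed.

Lemma EB_inv_res L pk k A B : E L pk A (Res k B) -> pk = None /\
  ((exists A', A = Res k A' /\ E (rem k L) None A' B) \/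
   (exists A', A = Res k A' /\ E (k :: rem k L) None A' B /\ ~ fo k B) \/
   (exists A', A = Res k A' /\ E [] (Some k) A' B) \/
   (exists W, B = Pre (POut (NC k) k) W)).
Proof. intros H; inversion H; subst; split; auto.
  - left; eauto.
  - right; left; eauto.
  - right; right; right. eauto.
  - right; right; left; eauto.
Qed.

Lemma EB_inv_pre L pk A p B : E L pk A (Pre p B) -> pk = None /\
  ((exists A', A = Pre p A' /\ E L None A' B) \/
   (exists m y2 l y q, p = PIn (NC m) y2 /\ B = Nil /\ A = N2 l m y q /\ In l L)).
Proof. intros H; inversion H; subst; split; auto.
  - left; eauto.
  - right. do 5 eexists; repeat split; eauto.
Qed.

Lemma EB_inv_rep L pk A B : E L pk A (Rep B) -> pk = None /\ exists A', A = Rep A' /\ E L None A' B.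
Proof. intros H; inversion H; subst; split; eauto. Qed.

Definition condB (L : list chan) (a : act) (A B : proc) :=
  (forall l, In l L -> ~ fo l B) /\ (forall k c, a = AIn k c -> ~ In c L) /\
  (forall c, act_bn a c -> ~ free_chan c A).

Definition conclB (pk : option chan) (L : list chan) (a : act) (A B' : proc) :=
  match pk with
  | None => exists A' A0 B0, trans A a A' /\ alpha A' A0 /\ alpha B0 B' /\ E L None A0 B0
  | Some k => (exists d, a = ABOut k d) \/ (exists c, a = AIn k c) \/
              (a = ATau /\ exists A' A0 B0, trans A a A' /\ alpha A' A0 /\ alpha B0 B' /\ E L None A0 B0)
  end.


Lemma BW_n n : forall B, size B <= n -> forall L pk A, E L pk A B ->
  forall B1 a B', alpha B B1 -> trans B1 a B' -> condB L a A B -> conclB pk L a A B'.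
Proof.
  induction n as [|n IHn]; intros B Hs L pk A HE B1 a B' Ha Ht HC; [pose proof (size_pos B); lia|].
  revert B Hs L pk A HE Ha HC.
  induction Ht; intros B0 Hs L pk A0 HE Ha HC.
  -
    destruct (alpha_pre _ _ _ (al_sym _ _ Ha)) as [p' [P' [-> [[N [-> Hp]]|[x [x' [S _]]]]]]]; [|discriminate].
    apply EB_inv_pre in HE.
    destruct HE as [-> [[A' [-> HE]]|[m [y2 [l0 [y [q [Ep _]]]]]]]]; try discriminate.
    simpl. exists A', A', P'. repeat split; [apply t_out|apply al_refl|apply al_sym; auto|auto].
  -
    destruct (alpha_pre _ _ _ (al_sym _ _ Ha)) as [p' [P' [-> [[N _]|[x0 [x' [S [-> Hsw]]]]]]]]; [discriminate|].
    simpl in S; inversion S; subst x0. simpl in *.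
    apply EB_inv_pre in HE.
    destruct HE as [-> [[A' [-> HE]]|[m [y2 [l0 [y [q [Ep [-> [-> Hl0]]]]]]]]]].
    + destruct (E_RA _ _ _ _ l HE) as [A2 [P2 [H1 [H2 [H3 [H4 H5]]]]]].
      simpl. exists (subst A2 x' l), (subst A2 x' l), (subst P2 x' l). repeat split.
      * eapply t_alpha. apply al_pre; eauto. apply t_in; auto.
      * apply al_refl.
      * eapply TIN; [|eauto|eauto]. eapply al_trans; [|exact Ha]. apply al_pre, al_sym; auto.
      * apply E_subst; auto. apply (proj1 (proj2 HC) k l); auto.
    + inversion Ep; subst m y2.
      assert (P = Nil).
      { destruct (fresh_v [P] [x; x']) as [w [Hw1 Hw2]].
        specialize (Hsw w (Hw1 _ (or_introl eq_refl)) ltac:(simpl; auto)). simpl in Hsw.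
        apply alpha_nil_r in Hsw. apply mapv_nil in Hsw. auto. }
      subst P. destruct (trans_N2 l0 k y q l) as [q' Htq].
      simpl. exists (Pre (PMatch (NC l) (NC l0) q') Nil), (Pre (PMatch (NC l) (NC l0) q') Nil), Nil. repeat split.
      * auto.
      * apply al_refl.
      * apply al_refl.
      * apply E_n1. intro; subst. apply (proj1 (proj2 HC) k l0 eq_refl); auto.
  -
    destruct (alpha_peel _ _ _ _ _ (al_sym _ _ Ha)) as [q' [R' [-> Hq]]].
    apply EB_inv_pre in HE.
    destruct HE as [-> [[A' [-> HE]]|[m [y2 [l0 [y [q [Ep _]]]]]]]]; try discriminate.
    assert (Hs': size (Pre q' R') <= S n) by (simpl in *; lia).
    assert (HC': condB L al (Pre q' A') (Pre q' R')).
    { destruct HC as [HC1 [HC2 HC3]]. split; [exact HC1|split; [exact HC2|]].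
      intros c Hc Hf. apply (HC3 c Hc). simpl in *. destruct Hf; auto. }
    destruct (IHHt (Pre q' R') Hs' L None (Pre q' A') (E_pre _ _ _ _ HE) (al_sym _ _ Hq) HC')
      as [A's [A0s [B0s [Ht2 [Ha2 [Hb2 HE2]]]]]].
    simpl. exists A's, A0s, B0s. repeat split; auto. apply t_match; auto.
  -
    pose proof Ha as Ha0.
    destruct (alpha_res _ _ _ (al_sym _ _ Ha)) as [k' [PB [-> Hsw]]].
    apply EB_inv_res in HE. destruct HE as [-> HE].
    destruct HE as [[A' [-> HE]]|[[A' [-> [HE Hfo]]]|[[A' [-> HE]]|[W ->]]]].
    4:{ exfalso. eapply OutSelfDead. apply t_res; eauto. apply al_sym; exact Ha0. }
    all: destruct (fresh_c [P; P'; PB; A'] (k :: k' :: L ++ achans al)) as [z [Hz1 Hz2]].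
    all: simpl in Hz2; rewrite in_app_iff in Hz2.
    all: assert (Hz3: ~ occurs_c z P) by (apply Hz1; simpl; auto).
    all: assert (Hz4: ~ occurs_c z P') by (apply Hz1; simpl; auto).
    all: assert (Hz5: ~ occurs_c z PB) by (apply Hz1; simpl; auto).
    all: assert (Hz6: ~ occurs_c z A') by (apply Hz1; simpl; auto).
    all: assert (Hza: ~ act_names al z) by (intro Hq; apply achans_in in Hq; tauto).
    all: pose proof (trans_sw k z _ _ _ Ht) as Ht'.
    all: rewrite mapa_id in Ht' by (intros c Hc; apply sw_o; intro; subst; tauto).
    all: assert (Hsz: size (mapc (sw k' z) PB) <= n) by (rewrite size_mapc; simpl in Hs; lia).
    all: specialize (Hsw z Hz3 Hz5).
    all: assert (HC3: forall c, act_bn al c -> ~ free_chan c (mapc (sw k' z) A')).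
    all: try (intros c Hc Hf; rewrite free_sw in Hf; destruct (Nat.eq_dec c k');
      [subst; rewrite sw_l in Hf; apply Hz6, free_occ; auto|
       rewrite sw_o in Hf by (auto; intro; subst; apply Hza, act_bn_names; auto);
       apply (proj2 (proj2 HC) c Hc); simpl; auto]).
    +
      assert (HC': condB (rem z L) al (mapc (sw k' z) A') (mapc (sw k' z) PB)).
      { split; [|split; auto].
        - intros l0 Hl0 Hf. rewrite in_rem in Hl0. rewrite fo_sw in Hf.
          destruct (Nat.eq_dec l0 k').
          + subst. rewrite sw_l in Hf. apply Hz5, free_occ, fo_free; auto.
          + rewrite sw_o in Hf by tauto. apply (proj1 HC l0); [tauto|]. simpl; auto.
        - intros k0 c0 Ea Hc. rewrite in_rem in Hc. apply (proj1 (proj2 HC) k0 c0); tauto. }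
      destruct (IHn _ Hsz (rem z L) None (mapc (sw k' z) A') (E_res_rename L k' A' PB z HE ltac:(tauto))
        _ _ _ (al_sym _ _ Hsw) Ht' HC') as [A's [A0s [B0s [Ht2 [Ha2 [Hb2 HE2]]]]]].
      simpl. exists (Res z A's), (Res z A0s), (Res z B0s). repeat split.
      * eapply t_alpha. apply (alpha_res_sw k' z); auto. apply t_res; auto.
      * apply al_res; auto.
      * eapply al_trans; [apply al_res; exact Hb2|]. apply al_sym, (alpha_res_sw k z); auto.
      * apply E_res; auto.
    +
      assert (HC': condB (z :: rem z L) al (mapc (sw k' z) A') (mapc (sw k' z) PB)).
      { split; [|split; auto].
        - intros l0 Hl0 Hf. simpl in Hl0. rewrite in_rem in Hl0. rewrite fo_sw in Hf.
          destruct Hl0 as [Hl0|Hl0]. subst. rewrite sw_r in Hf. auto.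
          destruct (Nat.eq_dec l0 k').
          + subst. rewrite sw_l in Hf. apply Hz5, free_occ, fo_free; auto.
          + rewrite sw_o in Hf by tauto. apply (proj1 HC l0); [tauto|]. simpl; auto.
        - intros k0 c0 Ea Hc. simpl in Hc. rewrite in_rem in Hc. destruct Hc as [Hc|Hc].
          subst. apply Hza. subst; simpl; auto. apply (proj1 (proj2 HC) k0 c0); tauto. }
      destruct (IHn _ Hsz (z :: rem z L) None (mapc (sw k' z) A') (E_prot_rename L k' A' PB z HE ltac:(tauto))
        _ _ _ (al_sym _ _ Hsw) Ht' HC') as [A's [A0s [B0s [Ht2 [Ha2 [Hb2 HE2]]]]]].
      simpl. exists (Res z A's), (Res z A0s), (Res z B0s). repeat split.
      * eapply t_alpha. apply (alpha_res_sw k' z); auto. apply t_res; auto.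
      * apply al_res; auto.
      * eapply al_trans; [apply al_res; exact Hb2|]. apply al_sym, (alpha_res_sw k z); auto.
      * apply E_prot; auto. intro Hf. rewrite (alpha_fo _ _ _ Hb2) in Hf.
        destruct (FO _ _ _ Ht' z Hf) as [Hf2|Hf2].
        -- rewrite (alpha_fo _ _ _ Hsw) in Hf2. rewrite fo_sw, sw_r in Hf2. auto.
        -- apply Hza, act_bn_names; auto.
    +
      pose proof (E_mapc (sw k' z) _ _ _ _ (sw_inj k' z) HE) as HE'. simpl in HE'. rewrite sw_l in HE'.
      assert (HC': condB [] al (mapc (sw k' z) A') (mapc (sw k' z) PB)) by (split; [|split]; intros; simpl in *; auto).
      pose proof (IHn _ Hsz [] (Some z) (mapc (sw k' z) A') HE' _ _ _ (al_sym _ _ Hsw) Ht' HC') as IH.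
      simpl in IH. destruct IH as [[d Ed]|[[c0 Ec]|[Et [A's [A0s [B0s [Ht2 [Ha2 [Hb2 HE2]]]]]]]]].
      * subst. simpl in Hza; tauto.
      * subst. simpl in Hza; tauto.
      * simpl. exists (Res z A's), (Res z A0s), (Res z B0s). repeat split.
        -- eapply t_alpha. apply (alpha_res_sw k' z); auto. apply t_res; auto.
        -- apply al_res; auto.
        -- eapply al_trans; [apply al_res; exact Hb2|]. apply al_sym, (alpha_res_sw k z); auto.
        -- apply E_res. eapply E_index; eauto. simpl; tauto.
  -
    pose proof Ha as Ha0.
    destruct (alpha_res _ _ _ (al_sym _ _ Ha)) as [l' [PB [-> Hsw]]].
    apply EB_inv_res in HE. destruct HE as [-> HE].
    destruct HE as [[A' [-> HE]]|[[A' [-> [HE Hfo]]]|[[A' [-> HE]]|[W ->]]]].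
    4:{ exfalso. eapply OutSelfDead. apply t_open; eauto. apply al_sym; exact Ha0. }
    all: destruct (fresh_c [P; Q; PB; A'] (k :: l :: l' :: L)) as [z [Hz1 Hz2]].
    all: simpl in Hz2.
    all: assert (Hz3: ~ occurs_c z P) by (apply Hz1; simpl; auto).
    all: assert (Hz4: ~ occurs_c z Q) by (apply Hz1; simpl; auto).
    all: assert (Hz5: ~ occurs_c z PB) by (apply Hz1; simpl; auto).
    all: assert (Hz6: ~ occurs_c z A') by (apply Hz1; simpl; auto).
    all: pose proof (trans_sw l z _ _ _ Ht) as Ht'.
    all: simpl in Ht'; rewrite sw_l, (sw_o l z k) in Ht' by (auto; intro; subst; tauto).
    all: assert (Hsz: size (mapc (sw l' z) PB) <= n) by (rewrite size_mapc; simpl in Hs; lia).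
    all: specialize (Hsw z Hz3 Hz5).
    all: assert (Hfl: ~ free_chan l (Res l' A')) by (apply (proj2 (proj2 HC)); simpl; auto).
    +
      assert (HE1: E (rem l' (rem l L)) None A' PB).
      { eapply E_index; eauto. intros c Hc Hf. rewrite !in_rem in *. destruct Hc as [Hc Hc'].
        destruct (Nat.eq_dec c l); [subst|tauto]. exfalso. apply Hfl. simpl; split; auto. }
      assert (HC': condB (rem z (rem l L)) (AOut k z) (mapc (sw l' z) A') (mapc (sw l' z) PB)).
      { split; [|split].
        - intros l0 Hl0 Hf. rewrite !in_rem in Hl0. rewrite fo_sw in Hf.
          destruct (Nat.eq_dec l0 l').
          + subst. rewrite sw_l in Hf. apply Hz5, free_occ, fo_free; auto.
          + rewrite sw_o in Hf by tauto. apply (proj1 HC l0); [tauto|]. simpl; auto.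
        - intros; discriminate.
        - intros c Hc; simpl in Hc; tauto. }
      assert (Hzl: ~ In z (rem l L)) by (rewrite in_rem; tauto).
      destruct (IHn _ Hsz (rem z (rem l L)) None (mapc (sw l' z) A') (E_res_rename (rem l L) l' A' PB z HE1 Hzl)
        _ _ _ (al_sym _ _ Hsw) Ht' HC') as [A's [A0s [B0s [Ht2 [Ha2 [Hb2 HE2]]]]]].
      simpl. exists (mapc (sw z l) A's), (mapc (sw z l) A0s), (mapc (sw z l) B0s). repeat split.
      * eapply t_alpha; [|apply t_open].
        -- eapply al_trans. apply (alpha_res_sw l' z); auto.
           assert (HX: alpha (Res z (mapc (sw l' z) A')) (mapc (sw z l) (Res z (mapc (sw l' z) A')))).
           { apply alpha_swap_nonfree; simpl. tauto.
             rewrite free_sw. destruct (Nat.eq_dec l l').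
             - subst. rewrite sw_l. intros [_ Hf]. apply Hz6, free_occ; auto.
             - rewrite sw_o by (auto; intro; subst; tauto). intros [_ Hf]. apply Hfl. simpl; split; auto. }
           simpl in HX. rewrite sw_l in HX. exact HX.
        -- pose proof (trans_sw z l _ _ _ Ht2) as Ht3. simpl in Ht3.
           rewrite sw_l, (sw_o z l k) in Ht3 by (auto; intro; subst; tauto). exact Ht3.
        -- auto.
      * apply alpha_sw; auto.
      * apply (alpha_sw z l) in Hb2. rewrite (mapc_sw_sym l z Q), sw_mapc_inv in Hb2. exact Hb2.
      * pose proof (E_mapc (sw z l) _ _ _ _ (sw_inj z l) HE2) as HE3. simpl in HE3.
        eapply E_index; eauto. intros c Hc Hf. apply in_map_iff in Hc. destruct Hc as [c0 [<- Hc]].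
        rewrite !in_rem in Hc. rewrite sw_o by tauto. tauto.
    +
      exfalso. pose proof (FOout _ _ _ Ht' k z eq_refl) as Hf.
      rewrite (alpha_fo _ _ _ Hsw), fo_sw, sw_r in Hf. auto.
    +
      pose proof (E_mapc (sw l' z) _ _ _ _ (sw_inj l' z) HE) as HE'. simpl in HE'. rewrite sw_l in HE'.
      assert (HC': condB [] (AOut k z) (mapc (sw l' z) A') (mapc (sw l' z) PB)) by (split; [|split]; intros; simpl in *; auto; discriminate).
      pose proof (IHn _ Hsz [] (Some z) (mapc (sw l' z) A') HE' _ _ _ (al_sym _ _ Hsw) Ht' HC') as IH.
      simpl in IH. destruct IH as [[d Ed]|[[c0 Ec]|[Et _]]]; discriminate.
  -
    destruct (alpha_par_r _ _ _ Ha) as [PB [RB [-> [HP HR]]]].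
    apply EB_inv_par in HE.
    destruct HE as [[-> [A1 [A2 [-> [HE1 HE2]]]]]|[k [l [mm [y [q [A2 [-> [-> [-> [-> [Hm [Hkl [HE2 HI]]]]]]]]]]]]]].
    + assert (Hs1: size PB <= S n) by (simpl in Hs; lia).
      assert (HC1: condB L al A1 PB).
      { destruct HC as [HC1 [HC2 HC3]]; split; [|split]; auto.
        - intros l0 Hl0 Hf; apply (HC1 l0 Hl0); simpl; auto.
        - intros c Hc Hf; apply (HC3 c Hc); simpl; auto. }
      destruct (IHHt PB Hs1 L None A1 HE1 HP HC1) as [A's [A0s [B0s [Ht2 [Ha2 [Hb2 HE3]]]]]].
      simpl. exists (Par A's A2), (Par A0s A2), (Par B0s RB). repeat split.
      * apply t_parl; auto. intros c Hc Hf. apply (proj2 (proj2 HC) c Hc). simpl; auto.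
      * apply al_par; auto; apply al_refl.
      * apply al_par; auto.
      * apply E_par; auto.
    + simpl. left. destruct (N3B_trans _ _ _ Ht l k mm y (al_sym _ _ HP) Hkl Hm) as [d [Ed _]]. eauto.
  -
    destruct (alpha_par_r _ _ _ Ha) as [RB [PB [-> [HR HP]]]].
    apply EB_inv_par in HE.
    destruct HE as [[-> [A1 [A2 [-> [HE1 HE2]]]]]|[k [l [mm [y [q [A2 [-> [-> [-> [-> [Hm [Hkl [HE2 HI]]]]]]]]]]]]]].
    + assert (Hs1: size PB <= S n) by (simpl in Hs; lia).
      assert (HC1: condB L al A2 PB).
      { destruct HC as [HC1 [HC2 HC3]]; split; [|split]; auto.
        - intros l0 Hl0 Hf; apply (HC1 l0 Hl0); simpl; auto.
        - intros c Hc Hf; apply (HC3 c Hc); simpl; auto. }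
      destruct (IHHt PB Hs1 L None A2 HE2 HP HC1) as [A's [A0s [B0s [Ht2 [Ha2 [Hb2 HE3]]]]]].
      simpl. exists (Par A1 A's), (Par A1 A0s), (Par RB B0s). repeat split.
      * apply t_parr; auto. intros c Hc Hf. apply (proj2 (proj2 HC) c Hc). simpl; auto.
      * apply al_par; auto; apply al_refl.
      * apply al_par; auto.
      * apply E_par; auto.
    + simpl. right; left. apply (E_inform _ _ _ k HE2) in HI. destruct HI as [x [W ->]].
      exact (inp_inv _ _ _ Ht k x W (al_sym _ _ HP)).
  -
    destruct (alpha_par_r _ _ _ Ha) as [PB [QB [-> [HP HQ]]]].
    apply EB_inv_par in HE.
    destruct HE as [[-> [A1 [A2 [-> [HE1 HE2]]]]]|[k0 [l0 [mm [y [q [A2 [-> [-> [-> [-> [Hm [Hkl [HE2 HI]]]]]]]]]]]]]].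
    + assert (Hs1: size PB <= S n) by (simpl in Hs; lia).
      assert (Hs2: size QB <= S n) by (simpl in Hs; lia).
      assert (HC1: condB L (AOut k l) A1 PB).
      { destruct HC as [HC1 [HC2 HC3]]; split; [|split]; try (intros; discriminate); try (intros; simpl in *; tauto).
        intros l1 Hl1 Hf; apply (HC1 l1 Hl1); simpl; auto. }
      destruct (IHHt1 PB Hs1 L None A1 HE1 HP HC1) as [A'p [A0p [B0p [Htp [Hap [Hbp HEp]]]]]].
      assert (Hl: ~ In l L).
      { intro Hl. apply (proj1 HC l Hl). simpl; left. rewrite (alpha_fo _ _ _ HP). eapply FOout; eauto. }
      assert (HC2: condB L (AIn k l) A2 QB).
      { destruct HC as [HC1' [HC2' HC3']]; split; [|split]; try (intros; simpl in *; tauto).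
        - intros l1 Hl1 Hf; apply (HC1' l1 Hl1); simpl; auto.
        - intros k1 c1 Ea; inversion Ea; subst; auto. }
      destruct (IHHt2 QB Hs2 L None A2 HE2 HQ HC2) as [A'q [A0q [B0q [Htq [Haq [Hbq HEq]]]]]].
      simpl. exists (Par A'p A'q), (Par A0p A0q), (Par B0p B0q). repeat split.
      * eapply t_comml; eauto.
      * apply al_par; auto.
      * apply al_par; auto.
      * apply E_par; auto.
    + exfalso. destruct (N3B_trans _ _ _ Ht1 l0 k0 mm y (al_sym _ _ HP) Hkl Hm) as [d [Ed _]]. discriminate.
  -
    destruct (alpha_par_r _ _ _ Ha) as [PB [QB [-> [HP HQ]]]].
    apply EB_inv_par in HE.
    destruct HE as [[-> [A1 [A2 [-> [HE1 HE2]]]]]|[k0 [l0 [mm [y [q [A2 [-> [-> [-> [-> [Hm [Hkl [HE2 HI]]]]]]]]]]]]]].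
    + assert (Hs1: size PB <= S n) by (simpl in Hs; lia).
      assert (Hs2: size QB <= S n) by (simpl in Hs; lia).
      assert (HC2: condB L (AOut k l) A2 QB).
      { destruct HC as [HC1 [HC2 HC3]]; split; [|split]; try (intros; discriminate); try (intros; simpl in *; tauto).
        intros l1 Hl1 Hf; apply (HC1 l1 Hl1); simpl; auto. }
      destruct (IHHt2 QB Hs2 L None A2 HE2 HQ HC2) as [A'q [A0q [B0q [Htq [Haq [Hbq HEq]]]]]].
      assert (Hl: ~ In l L).
      { intro Hl. apply (proj1 HC l Hl). simpl; right. rewrite (alpha_fo _ _ _ HQ). eapply FOout; eauto. }
      assert (HC1: condB L (AIn k l) A1 PB).
      { destruct HC as [HC1' [HC2' HC3']]; split; [|split]; try (intros; simpl in *; tauto).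
        - intros l1 Hl1 Hf; apply (HC1' l1 Hl1); simpl; auto.
        - intros k1 c1 Ea; inversion Ea; subst; auto. }
      destruct (IHHt1 PB Hs1 L None A1 HE1 HP HC1) as [A'p [A0p [B0p [Htp [Hap [Hbp HEp]]]]]].
      simpl. exists (Par A'p A'q), (Par A0p A0q), (Par B0p B0q). repeat split.
      * eapply t_commr; eauto.
      * apply al_par; auto.
      * apply al_par; auto.
      * apply E_par; auto.
    + exfalso. destruct (N3B_trans _ _ _ Ht1 l0 k0 mm y (al_sym _ _ HP) Hkl Hm) as [d [Ed _]]. discriminate.
  -
    destruct (alpha_par_r _ _ _ Ha) as [PB [QB [-> [HP HQ]]]].
    apply EB_inv_par in HE.
    destruct HE as [[-> [A1 [A2 [-> [HE1 HE2]]]]]|[k0 [l0 [mm [y [q [A2 [-> [-> [-> [-> [Hm [Hkl [HE2 HI]]]]]]]]]]]]]].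
    + assert (Hs1: size PB <= n) by (simpl in Hs; lia).
      assert (Hs2: size QB <= n) by (simpl in Hs; lia).
      destruct (BNfree _ _ _ Ht1 k l eq_refl) as [Hkl Hfp].
      destruct (fresh_c [A1; A2; PB; QB; P; Q; P'; Q'] (k :: l :: L)) as [z [Hz1 Hz2]]. simpl in Hz2.
      assert (Hz3: ~ occurs_c z A1) by (apply Hz1; simpl; auto).
      assert (Hz4: ~ occurs_c z A2) by (apply Hz1; simpl; auto).
      assert (Hz5: ~ occurs_c z P) by (apply Hz1; simpl; auto 10).
      assert (Hz6: ~ occurs_c z Q) by (apply Hz1; simpl; auto 10).
      assert (Hz7: ~ occurs_c z P') by (apply Hz1; simpl; auto 10).
      assert (Hz8: ~ occurs_c z Q') by (apply Hz1; simpl; auto 10).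
      pose proof (trans_sw l z _ _ _ Ht1) as Ht1'. simpl in Ht1'.
      rewrite sw_l, (sw_o l z k) in Ht1' by (auto; intro; subst; tauto).
      pose proof (trans_sw l z _ _ _ Ht2) as Ht2'. simpl in Ht2'.
      rewrite sw_l, (sw_o l z k) in Ht2' by (auto; intro; subst; tauto).
      assert (HP': alpha PB (mapc (sw l z) P)).
      { eapply al_trans; eauto. apply alpha_swap_nonfree; auto. intro Hf; apply Hz5, free_occ; auto. }
      assert (HQ': alpha QB (mapc (sw l z) Q)).
      { eapply al_trans; eauto. apply alpha_swap_nonfree; auto. intro Hf; apply Hz6, free_occ; auto. }
      assert (HC1: condB L (ABOut k z) A1 PB).
      { destruct HC as [HC1 [HC2 HC3]]; split; [|split]; try (intros; discriminate).
        - intros l1 Hl1 Hf; apply (HC1 l1 Hl1); simpl; auto.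
        - intros c Hc; simpl in Hc; subst. intro Hf; apply Hz3, free_occ; auto. }
      assert (HC2: condB L (AIn k z) A2 QB).
      { destruct HC as [HC1' [HC2' HC3']]; split; [|split]; try (intros; simpl in *; tauto).
        - intros l1 Hl1 Hf; apply (HC1' l1 Hl1); simpl; auto.
        - intros k1 c1 Ea; inversion Ea; subst; tauto. }
      destruct (IHn PB Hs1 L None A1 HE1 _ _ _ HP' Ht1' HC1) as [A'p [A0p [B0p [Htp [Hap [Hbp HEp]]]]]].
      destruct (IHn QB Hs2 L None A2 HE2 _ _ _ HQ' Ht2' HC2) as [A'q [A0q [B0q [Htq [Haq [Hbq HEq]]]]]].
      simpl. exists (Res z (Par A'p A'q)), (Res z (Par A0p A0q)), (Res z (Par B0p B0q)). repeat split.
      * eapply t_closel; eauto. intro Hf; apply Hz4, free_occ; auto.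
      * apply al_res, al_par; auto.
      * eapply al_trans; [apply al_res, al_par; [exact Hbp|exact Hbq]|].
        apply al_sym. apply (alpha_res_sw l z (Par P' Q')). simpl; tauto.
      * apply E_res. eapply E_index; [apply E_par; eauto|]. intros c Hc _. rewrite in_rem. split; auto. intro; subst; tauto.
    + destruct (N3B_trans _ _ _ Ht1 l0 k0 mm y (al_sym _ _ HP) Hkl Hm) as [d [Ed [Hkd [Hmd Hq']]]].
      inversion Ed; subst k0 d.
      assert (Hs2: size QB <= n) by (simpl in Hs; lia).
      destruct (fresh_c [A2; QB; Q; Q'; P'; Pre (POut (NC k) l0) (N2 l0 (odflt l0 mm) y q)]
                        [k; l; l0; odflt l0 mm]) as [z [Hz1 Hz2]]. simpl in Hz2.
      assert (Hz4: ~ occurs_c z A2) by (apply Hz1; simpl; auto).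
      assert (Hz6: ~ occurs_c z Q) by (apply Hz1; simpl; auto 10).
      assert (Hz7: ~ occurs_c z P') by (apply Hz1; simpl; auto 10).
      assert (Hz8: ~ occurs_c z Q') by (apply Hz1; simpl; auto 10).
      assert (Hz9: ~ occurs_c z (Pre (POut (NC k) l0) (N2 l0 (odflt l0 mm) y q))) by (apply Hz1; simpl; auto 10).
      pose proof (trans_sw l z _ _ _ Ht2) as Ht2'. simpl in Ht2'.
      rewrite sw_l, (sw_o l z k) in Ht2' by (auto; intro; subst; tauto).
      assert (HQ': alpha QB (mapc (sw l z) Q)).
      { eapply al_trans; eauto. apply alpha_swap_nonfree; auto. intro Hf; apply Hz6, free_occ; auto. }
      assert (HC2: condB [] (AIn k z) A2 QB) by (split; [|split]; intros; simpl in *; auto; discriminate).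
      destruct (IHn QB Hs2 [] None A2 HE2 _ _ _ HQ' Ht2' HC2) as [A'q [A0q [B0q [Htq [Haq [Hbq HEq]]]]]].
      simpl. right; right. split; auto.
      exists (Res z (Par (N2 z (odflt z mm) y (mapc_pref (sw l0 z) q)) A'q)),
             (Res z (Par (N2 z (odflt z mm) y (mapc_pref (sw l0 z) q)) A0q)),
             (Res z (Par (N2B (odflt z mm) y) B0q)). repeat split.
      * eapply t_closel; [| exact Htq |].
        -- eapply t_alpha. apply (N3_rename l0 (Some k) mm y q z); try congruence; auto.
           ++ intro E'; inversion E'; subst; tauto.
           ++ intro E'; subst; simpl in Hz2; tauto.
           ++ apply N3_open. intro; subst; tauto.
        -- intro Hf; apply Hz4, free_occ; auto.
      * apply al_res, al_par; [apply al_refl|auto].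
      * eapply al_trans; [|apply al_sym, (alpha_res_sw l z (Par P' Q')); simpl; tauto].
        apply al_res. simpl. apply al_par; auto.
        apply (alpha_sw l z) in Hq'. rewrite mapc_N2B in Hq'.
        replace (sw l z (odflt l mm)) with (odflt z mm) in Hq'. apply al_sym; auto.
        destruct mm as [m|]; simpl in *; [rewrite sw_o; auto; intro; subst; tauto|rewrite sw_l; auto].
      * apply E_prot.
        -- simpl. apply E_par. apply E_n2; simpl; auto. eapply E_index; eauto. simpl; tauto.
        -- intro Hf. simpl in Hf. destruct Hf as [Hf|Hf]. unfold N2B in Hf; simpl in Hf; tauto.
           rewrite (alpha_fo _ _ _ Hbq), fo_sw, sw_r in Hf. destruct (FO _ _ _ Ht2 l Hf) as [Hf2|Hf2]; [|simpl in Hf2; tauto].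
           apply fo_free in Hf2. auto.
  -
    destruct (alpha_par_r _ _ _ Ha) as [PB [QB [-> [HP HQ]]]].
    apply EB_inv_par in HE.
    destruct HE as [[-> [A1 [A2 [-> [HE1 HE2]]]]]|[k0 [l0 [mm [y [q [A2 [-> [-> [-> [-> [Hm [Hkl [HE2 HI]]]]]]]]]]]]]].
    + assert (Hs1: size PB <= n) by (simpl in Hs; lia).
      assert (Hs2: size QB <= n) by (simpl in Hs; lia).
      destruct (BNfree _ _ _ Ht2 k l eq_refl) as [Hkl Hfq].
      destruct (fresh_c [A1; A2; PB; QB; P; Q; P'; Q'] (k :: l :: L)) as [z [Hz1 Hz2]]. simpl in Hz2.
      assert (Hz3: ~ occurs_c z A1) by (apply Hz1; simpl; auto).
      assert (Hz4: ~ occurs_c z A2) by (apply Hz1; simpl; auto).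
      assert (Hz5: ~ occurs_c z P) by (apply Hz1; simpl; auto 10).
      assert (Hz6: ~ occurs_c z Q) by (apply Hz1; simpl; auto 10).
      assert (Hz7: ~ occurs_c z P') by (apply Hz1; simpl; auto 10).
      assert (Hz8: ~ occurs_c z Q') by (apply Hz1; simpl; auto 10).
      pose proof (trans_sw l z _ _ _ Ht1) as Ht1'. simpl in Ht1'.
      rewrite sw_l, (sw_o l z k) in Ht1' by (auto; intro; subst; tauto).
      pose proof (trans_sw l z _ _ _ Ht2) as Ht2'. simpl in Ht2'.
      rewrite sw_l, (sw_o l z k) in Ht2' by (auto; intro; subst; tauto).
      assert (HP': alpha PB (mapc (sw l z) P)).
      { eapply al_trans; eauto. apply alpha_swap_nonfree; auto. intro Hf; apply Hz5, free_occ; auto. }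
      assert (HQ': alpha QB (mapc (sw l z) Q)).
      { eapply al_trans; eauto. apply alpha_swap_nonfree; auto. intro Hf; apply Hz6, free_occ; auto. }
      assert (HC2: condB L (ABOut k z) A2 QB).
      { destruct HC as [HC1 [HC2 HC3]]; split; [|split]; try (intros; discriminate).
        - intros l1 Hl1 Hf; apply (HC1 l1 Hl1); simpl; auto.
        - intros c Hc; simpl in Hc; subst. intro Hf; apply Hz4, free_occ; auto. }
      assert (HC1: condB L (AIn k z) A1 PB).
      { destruct HC as [HC1' [HC2' HC3']]; split; [|split]; try (intros; simpl in *; tauto).
        - intros l1 Hl1 Hf; apply (HC1' l1 Hl1); simpl; auto.
        - intros k1 c1 Ea; inversion Ea; subst; tauto. }
      destruct (IHn PB Hs1 L None A1 HE1 _ _ _ HP' Ht1' HC1) as [A'p [A0p [B0p [Htp [Hap [Hbp HEp]]]]]].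
      destruct (IHn QB Hs2 L None A2 HE2 _ _ _ HQ' Ht2' HC2) as [A'q [A0q [B0q [Htq [Haq [Hbq HEq]]]]]].
      simpl. exists (Res z (Par A'p A'q)), (Res z (Par A0p A0q)), (Res z (Par B0p B0q)). repeat split.
      * eapply t_closer; eauto. intro Hf; apply Hz3, free_occ; auto.
      * apply al_res, al_par; auto.
      * eapply al_trans; [apply al_res, al_par; [exact Hbp|exact Hbq]|].
        apply al_sym. apply (alpha_res_sw l z (Par P' Q')). simpl; tauto.
      * apply E_res. eapply E_index; [apply E_par; eauto|]. intros c Hc _. rewrite in_rem. split; auto. intro; subst; tauto.
    + exfalso. destruct (N3B_trans _ _ _ Ht1 l0 k0 mm y (al_sym _ _ HP) Hkl Hm) as [d [Ed _]]. discriminate.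
  -
    destruct (alpha_rep_r _ _ Ha) as [PB [-> HP]].
    apply EB_inv_rep in HE. destruct HE as [-> [A' [-> HE]]].
    assert (Hs1: size PB <= S n) by (simpl in Hs; lia).
    destruct (IHHt PB Hs1 L None A' HE HP HC) as [A's [A0s [B0s [Ht2 [Ha2 [Hb2 HE3]]]]]].
    simpl. exists (Par A's (Rep A')), (Par A0s (Rep A')), (Par B0s (Rep PB)). repeat split.
    * apply t_rep_act; auto.
    * apply al_par; auto; apply al_refl.
    * apply al_par; auto; apply al_rep; auto.
    * apply E_par; auto; apply E_rep; auto.
  -
    destruct (alpha_rep_r _ _ Ha) as [PB [-> HP]].
    apply EB_inv_rep in HE. destruct HE as [-> [A' [-> HE]]].
    assert (Hs1: size PB <= S n) by (simpl in Hs; lia).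
    assert (HC1: condB L (AOut k l) A' PB).
    { destruct HC as [HC1 [HC2 HC3]]; split; [exact HC1|split]; intros; [discriminate|simpl in *; tauto]. }
    destruct (IHHt1 PB Hs1 L None A' HE HP HC1) as [A'a [A0a [B0a [Hta [Haa [Hba HEa]]]]]].
    assert (Hl: ~ In l L).
    { intro Hl. apply (proj1 HC l Hl). simpl. rewrite (alpha_fo _ _ _ HP). exact (FOout _ _ _ Ht1 k l eq_refl). }
    assert (HC2: condB L (AIn k l) A' PB).
    { destruct HC as [HC1' [HC2' HC3']]; split; [exact HC1'|split]; [|intros; simpl in *; tauto].
      intros k1 c1 Ea; inversion Ea; subst; auto. }
    destruct (IHHt2 PB Hs1 L None A' HE HP HC2) as [A'b [A0b [B0b [Htb [Hab [Hbb HEb]]]]]].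
    simpl. exists (Par (Par A'a A'b) (Rep A')), (Par (Par A0a A0b) (Rep A')), (Par (Par B0a B0b) (Rep PB)). repeat split.
    * eapply t_rep_comm; eauto.
    * apply al_par; [apply al_par; auto|apply al_refl].
    * apply al_par; [apply al_par; auto|apply al_rep; auto].
    * apply E_par; [apply E_par; auto|apply E_rep; auto].
  -
    destruct (alpha_rep_r _ _ Ha) as [PB [-> HP]].
    apply EB_inv_rep in HE. destruct HE as [-> [A' [-> HE]]].
    assert (Hs1: size PB <= n) by (simpl in Hs; lia).
    destruct (BNfree _ _ _ Ht1 k l eq_refl) as [Hkl _].
    destruct (fresh_c [A'; PB; P; P'; P''] (k :: l :: L)) as [z [Hz1 Hz2]]. simpl in Hz2.
    assert (Hz3: ~ occurs_c z A') by (apply Hz1; simpl; auto).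
    assert (Hz5: ~ occurs_c z P) by (apply Hz1; simpl; auto 10).
    assert (Hz7: ~ occurs_c z P') by (apply Hz1; simpl; auto 10).
    assert (Hz8: ~ occurs_c z P'') by (apply Hz1; simpl; auto 10).
    pose proof (trans_sw l z _ _ _ Ht1) as Ht1'. simpl in Ht1'.
    rewrite sw_l, (sw_o l z k) in Ht1' by (auto; intro; subst; tauto).
    pose proof (trans_sw l z _ _ _ Ht2) as Ht2'. simpl in Ht2'.
    rewrite sw_l, (sw_o l z k) in Ht2' by (auto; intro; subst; tauto).
    assert (HP': alpha PB (mapc (sw l z) P)).
    { eapply al_trans; eauto. apply alpha_swap_nonfree; auto. intro Hf; apply Hz5, free_occ; auto. }
    assert (HC1: condB L (ABOut k z) A' PB).
    { destruct HC as [HC1 [HC2 HC3]]; split; [|split]; try (intros; discriminate); auto.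
      intros c Hc; simpl in Hc; subst. intro Hf; apply Hz3, free_occ; auto. }
    assert (HC2: condB L (AIn k z) A' PB).
    { destruct HC as [HC1' [HC2' HC3']]; split; [|split]; try (intros; simpl in *; tauto); auto.
      intros k1 c1 Ea; inversion Ea; subst; tauto. }
    destruct (IHn PB Hs1 L None A' HE _ _ _ HP' Ht1' HC1) as [A'a [A0a [B0a [Hta [Haa [Hba HEa]]]]]].
    destruct (IHn PB Hs1 L None A' HE _ _ _ HP' Ht2' HC2) as [A'b [A0b [B0b [Htb [Hab [Hbb HEb]]]]]].
    simpl. exists (Par (Res z (Par A'a A'b)) (Rep A')), (Par (Res z (Par A0a A0b)) (Rep A')),
      (Par (Res z (Par B0a B0b)) (Rep PB)). repeat split.
    * eapply t_rep_close; eauto. intro Hf; apply Hz3, free_occ; auto.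
    * apply al_par; [apply al_res, al_par; auto|apply al_refl].
    * apply al_par; [|apply al_rep; auto].
      eapply al_trans; [apply al_res, al_par; [exact Hba|exact Hbb]|].
      apply al_sym. apply (alpha_res_sw l z (Par P' P'')). simpl; tauto.
    * apply E_par; [|apply E_rep; auto]. apply E_res. eapply E_index; [apply E_par; eauto|].
      intros c Hc _. rewrite in_rem. split; auto. intro; subst; tauto.
  -
    eapply IHHt; eauto. eapply al_trans; eauto.
Qed.


Definition SR (A B : proc) : Prop := exists A0 B0, alpha A0 A /\ alpha B0 B /\ E [] None A0 B0.
Definition RR (A B : proc) : Prop := SR A B \/ SR B A.

Lemma RR_bisim : is_bisim RR.
Proof. split.
  - intros P Q [H|H]; [right|left]; auto.
  - intros P Q [[A0 [B0 [HA [HB HE]]]]|[A0 [B0 [HA [HB HE]]]]] al P' Ht Hbn.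
    + assert (HC: condF [] al B0) by (split; intros; simpl in *; tauto).
      pose proof (FW_n (size A0) A0 (le_n _) [] None B0 HE P al P' HA Ht HC) as Hc.
      simpl in Hc. destruct Hc as [A1 [B' [B1 [Ht2 [Ha2 [Hb2 HE2]]]]]].
      exists B'. split.
      * eapply t_alpha; [apply al_sym; exact HB|exact Ht2].
      * left. exists A1, B1. repeat split; auto; try apply al_refl; apply al_sym; auto.
    + assert (HC: condB [] al A0 B0).
      { split; [|split]; intros; simpl in *; try tauto.
        intro Hf. rewrite (alpha_free _ _ _ HA) in Hf. apply (Hbn c); auto. }
      pose proof (BW_n (size B0) B0 (le_n _) [] None A0 HE P al P' HB Ht HC) as Hc.
      simpl in Hc. destruct Hc as [A' [A1 [B1 [Ht2 [Ha2 [Hb2 HE2]]]]]].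
      exists A'. split.
      * eapply t_alpha; [apply al_sym; exact HA|exact Ht2].
      * right. exists A1, B1. repeat split; auto; apply al_sym; auto.
Qed.

Theorem proposition1 (P : proc) (m : chan) (pi : prefix) (k l : chan) (x y : var) :
  bisim
    (Res k (Par (Res l (Pre (POut (NC k) l)
                          (Pre (PIn (NC m) y)
                               (Pre (PMatch (NV y) (NC l) pi) Nil))))
                (Pre (PIn (NC k) x) P)))
    (Res k (Par (Res l (Pre (POut (NC k) l)
                          (Pre (PIn (NC m) y) Nil)))
                (Pre (PIn (NC k) x) P))).
Proof.
  exists RR. split; [apply RR_bisim|]. left.
  eexists; eexists; split; [apply al_refl|split; [apply al_refl|]].
  set (mm := if Nat.eqb m l then None else Some m).
  assert (Hmm: mm <> Some l) by (unfold mm; destruct (Nat.eqb_spec m l); congruence).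
  assert (Hm: odflt l mm = m) by (unfold mm; destruct (Nat.eqb_spec m l); simpl; auto).
  destruct (Nat.eq_dec k l).
  - subst k. apply E_res. simpl. apply E_par.
    + pose proof (E_dead [] l mm y pi Hmm) as HD. unfold N3, N3B, N2, N2B in HD. simpl in HD.
      rewrite Hm in HD. exact HD.
    + apply E_refl.
  - apply E_ires.
    pose proof (E_ipar k l mm y pi (Pre (PIn (NC k) x) P) (Pre (PIn (NC k) x) P) Hmm n (E_refl _ _)
      ltac:(exists x, P; auto)) as HD.
    unfold N3, N3B, N2, N2B in HD. simpl in HD. rewrite Hm in HD. exact HD.
Qed.
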